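(* Let $(X,T)$ be a topological dynamical system. Then the following conditions are equivalent: (1) $(X,T)$ is strongly proximal; (2) $(X,T)$ is proximal and uniquely ergodic; (3) $\operatorname{supp}(X,T)$ is a singleton; (4) $BP(X,T)=X^2$; (5) for every pair $(x,y)\in X^2$ and every $\varepsilon>0$, the set $\{n\in\mathbb{Z}_+:\ d(T^nx,T^ny)<\varepsilon\}$ has upper density one.
   Context: A topological dynamical system $(X,T)$ consists of a non-empty compact metric space $(X,d)$ and a continuous map $T:X\to X$ (not necessarily surjective). $\mathbb{Z}_+$ denotes the non-negative integers. For $F\subset\mathbb{Z}_+$, the upper density is $\overline{d}(F)=\limsup_{n\to\infty}\#(F\cap[0,n-1])/n$. A set $F\subset\mathbb{Z}_+$ has Banach density one if for every $\lambda<1$ there is $N\ge1$ such that $\#(F\cap I)\ge\lambda\,\#(I)$ for every interval $I\subset\mathbb{Z}_+$ of integers with $\#(I)\ge N$. A pair $(x,y)\in X^2$ is Banach proximal if for every $\varepsilon>0$ the set $\{n\in\mathbb{Z}_+: d(T^nx,T^ny)<\varepsilon\}$ has Banach density one; $BP(X,T)$ is the set of all Banach proximal pairs. A pair $(x,y)$ is proximal if $\liminf_{n\to\infty}d(T^nx,T^ny)=0$, and $(X,T)$ is proximal if every pair in $X^2$ is proximal. $M(X)$ denotes the space of Borel probability measures on $X$ with the weak$^*$ topology, $T_M:M(X)\to M(X)$ is the push-forward map $T_M\mu=\mu\circ T^{-1}$, and $(X,T)$ is strongly proximal if the system $(M(X),T_M)$ is proximal. $M(X,T)$ is the set of $T$-invariant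 Borel probability measures; $(X,T)$ is uniquely ergodic if $M(X,T)$ is a singleton. The support $\operatorname{supp}(\mu)$ of $\mu\in M(X)$ is the smallest closed set of full measure, and the support of the system, $\operatorname{supp}(X,T)$, is the smallest closed set $C\subset X$ with $\mu(C)=1$ for all $\mu\in M(X,T)$; equivalently $\operatorname{supp}(X,T)=\overline{\bigcup\{\operatorname{supp}(\mu):\mu\in M(X,T)\}}$. *)

(* Defs.v *)
From Stdlib Require Import Reals Lra List ClassicalEpsilon.
Open Scope R_scope.
Set Implicit Arguments.

Definition is_metric {X : Type} (d : X -> X -> R) : Prop :=
  (forall x y, 0 <= d x y) /\
  (forall x y, d x y = 0 <-> x = y) /\
  (forall x y, d x y = d y x) /\
  (forall x y z, d x z <= d x y + d y z).

Definition open_set {X : Type} (d : X -> X -> R) (U : X -> Prop) : Prop :=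
  forall x, U x -> exists r, 0 < r /\ forall y, d x y < r -> U y.

Definition closed_set {X : Type} (d : X -> X -> R) (C : X -> Prop) : Prop :=
  open_set d (fun x => ~ C x).

Definition compact_space {X : Type} (d : X -> X -> R) : Prop :=
  forall (I : Type) (U : I -> X -> Prop),
    (forall i, open_set d (U i)) -> (forall x, exists i, U i x) ->
    exists l : list I, forall x, exists i, In i l /\ U i x.

Definition continuous_map {X : Type} (d : X -> X -> R) (T : X -> X) : Prop :=
  forall x eps, 0 < eps ->
    exists delta, 0 < delta /\ forall y, d x y < delta -> d (T x) (T y) < eps.

Definition iter {X : Type} (T : X -> X) (n : nat) (x : X) : X := Nat.iter n T x.

Definition sigma_algebra {X : Type} (S : (X -> Prop) -> Prop) : Prop :=
  S (fun _ => True) /\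
  (forall A, S A -> S (fun x => ~ A x)) /\
  (forall A : nat -> X -> Prop, (forall n, S (A n)) -> S (fun x => exists n, A n x)).

Definition borel {X : Type} (d : X -> X -> R) (A : X -> Prop) : Prop :=
  forall S, sigma_algebra S -> (forall U, open_set d U -> S U) -> S A.

(** A Borel probability measure (values on non-Borel sets are irrelevant). *)
Record prob_measure {X : Type} (d : X -> X -> R) := {
  pm :> (X -> Prop) -> R;
  pm_nonneg : forall A, borel d A -> 0 <= pm A;
  pm_full : pm (fun _ => True) = 1;
  pm_sigma : forall A : nat -> X -> Prop,
      (forall n, borel d (A n)) ->
      (forall m n, m <> n -> forall x, A m x -> A n x -> False) ->
      infinite_sum (fun n => pm (A n)) (pm (fun x => exists n, A n x))
}.

(** (T_M)^n mu = mu o (T^n)^{-1} *)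
Definition pushn {X : Type} (T : X -> X) (n : nat) (mu : (X -> Prop) -> R)
  : (X -> Prop) -> R := fun A => mu (fun x => A (iter T n x)).

Definition invariant {X : Type} (d : X -> X -> R) (T : X -> X)
  (mu : prob_measure d) : Prop :=
  forall A, borel d A -> mu (fun x => A (T x)) = mu A.

Definition uniquely_ergodic {X : Type} (d : X -> X -> R) (T : X -> X) : Prop :=
  (exists mu : prob_measure d, invariant T mu) /\
  (forall mu nu : prob_measure d, invariant T mu -> invariant T nu ->
     forall A, borel d A -> mu A = nu A).

(** * Weak-* topology on M(X) via the Levy-Prokhorov metric
    pi(mu,nu) = inf { e > 0 | forall Borel A, mu A <= nu A^e + e and nu A <= mu A^e + e },
    which metrizes the weak-* topology on M(X) for X separable metric. *)
Definition eps_nbhd {X : Type} (d : X -> X -> R) (A : X -> Prop) (e : R) : X -> Prop :=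
  fun x => exists a, A a /\ d x a < e.

Definition prokhorov_le {X : Type} (d : X -> X -> R) (mu nu : (X -> Prop) -> R) (e : R)
  : Prop :=
  forall A, borel d A ->
    mu A <= nu (eps_nbhd d A e) + e /\ nu A <= mu (eps_nbhd d A e) + e.

(** pi(mu,nu) < e *)
Definition prokhorov_lt {X : Type} (d : X -> X -> R) (mu nu : (X -> Prop) -> R) (e : R)
  : Prop := exists e', 0 < e' /\ e' < e /\ prokhorov_le d mu nu e'.

Definition proximal_pair {X : Type} (d : X -> X -> R) (T : X -> X) (x y : X) : Prop :=
  forall eps, 0 < eps -> forall N : nat,
    exists n : nat, (N <= n)%nat /\ d (iter T n x) (iter T n y) < eps.

Definition proximal {X : Type} (d : X -> X -> R) (T : X -> X) : Prop :=
  forall x y, proximal_pair d T x y.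

(** (M(X), T_M) proximal, with M(X) metrized by the Prokhorov metric *)
Definition strongly_proximal {X : Type} (d : X -> X -> R) (T : X -> X) : Prop :=
  forall mu nu : prob_measure d, forall eps, 0 < eps -> forall N : nat,
    exists n : nat, (N <= n)%nat /\ prokhorov_lt d (pushn T n mu) (pushn T n nu) eps.

Definition is_system_support {X : Type} (d : X -> X -> R) (T : X -> X) (C : X -> Prop)
  : Prop :=
  closed_set d C /\
  (forall mu : prob_measure d, invariant T mu -> mu C = 1) /\
  (forall C', closed_set d C' ->
     (forall mu : prob_measure d, invariant T mu -> mu C' = 1) ->
     forall x, C x -> C' x).

Fixpoint count_in (F : nat -> Prop) (a L : nat) : nat :=
  match L with
  | O => O
  | S L' => (count_in F a L' +
             (if excluded_middle_informative (F (a + L')%nat) then 1 else 0))%nat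
  end.

Definition banach_density_one (F : nat -> Prop) : Prop :=
  forall lam, lam < 1 -> exists N : nat, (1 <= N)%nat /\
    forall a L : nat, (N <= L)%nat -> lam * INR L <= INR (count_in F a L).

Definition upper_density_is (F : nat -> Prop) (l : R) : Prop :=
  forall delta, 0 < delta ->
    (exists N : nat, forall n : nat, (N <= n)%nat -> (1 <= n)%nat ->
        INR (count_in F 0 n) / INR n < l + delta) /\
    (forall N : nat, exists n : nat, (N <= n)%nat /\ (1 <= n)%nat /\
        l - delta < INR (count_in F 0 n) / INR n).

Definition banach_proximal {X : Type} (d : X -> X -> R) (T : X -> X) (x y : X) : Prop :=
  forall eps, 0 < eps ->
    banach_density_one (fun n => d (iter T n x) (iter T n y) < eps).

(* Main.v *)
Require Import Defs.
From Stdlib Require Import Reals.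
Open Scope R_scope.
From Stdlib Require Import Reals Lra Lia ZArith List ClassicalEpsilon Classical FunctionalExtensionality PropExtensionality Cantor.
Require Import Defs.
Open Scope R_scope.


Lemma set_ext {X : Type} (A B : X -> Prop) : (forall x, A x <-> B x) -> A = B.
Proof. intro H; apply functional_extensionality; intro x; apply propositional_extensionality; auto. Qed.

Lemma count_ext (F G : nat -> Prop) a L :
  (forall k, (k < L)%nat -> (F (a+k)%nat <-> G (a+k)%nat)) -> count_in F a L = count_in G a L.
Proof.
  induction L; simpl; intros H; auto.
  rewrite IHL by (intros; apply H; lia).
  destruct (excluded_middle_informative (F (a+L)%nat)), (excluded_middle_informative (G (a+L)%nat)); auto;
  exfalso; [apply n | apply n]; apply H; auto; lia.
Qed.

Lemma count_mono (F G : nat -> Prop) a L :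
  (forall k, (k < L)%nat -> F (a+k)%nat -> G (a+k)%nat) -> (count_in F a L <= count_in G a L)%nat.
Proof.
  induction L; simpl; intros H; auto.
  assert (IH := IHL ltac:(intros; apply H; auto; lia)).
  destruct (excluded_middle_informative (F (a+L)%nat)), (excluded_middle_informative (G (a+L)%nat)); try lia.
  exfalso; apply n; apply H; auto.
Qed.

Lemma count_le F a L : (count_in F a L <= L)%nat.
Proof. induction L; simpl; auto. destruct excluded_middle_informative; lia. Qed.

Lemma count_split F a j l : count_in F a (j + l) = (count_in F a j + count_in F (a+j) l)%nat.
Proof.
  induction l; simpl.
  - rewrite Nat.add_0_r; lia.
  - replace (j + S l)%nat with (S (j + l)) by lia. simpl. rewrite IHl.
    replace (a + (j + l))%nat with (a + j + l)%nat by lia. lia.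
Qed.

Lemma count_compl F a L : (count_in F a L + count_in (fun n => ~ F n) a L)%nat = L.
Proof.
  induction L; simpl; auto.
  destruct (excluded_middle_informative (F (a+L)%nat)), (excluded_middle_informative (~ F (a+L)%nat)); try tauto; lia.
Qed.

Lemma count_union F G a L : (count_in (fun n => F n \/ G n) a L <= count_in F a L + count_in G a L)%nat.
Proof.
  induction L; simpl; auto.
  destruct (excluded_middle_informative (F (a+L)%nat \/ G (a+L)%nat)),
    (excluded_middle_informative (F (a+L)%nat)), (excluded_middle_informative (G (a+L)%nat)); try tauto; lia.
Qed.

Lemma count_union_disj F G a L : (forall n, F n -> G n -> False) ->
  count_in (fun n => F n \/ G n) a L = (count_in F a L + count_in G a L)%nat.
Proof.
  intro D; induction L; simpl; auto.
  destruct (excluded_middle_informative (F (a+L)%nat \/ G (a+L)%nat)),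
    (excluded_middle_informative (F (a+L)%nat)), (excluded_middle_informative (G (a+L)%nat)); try tauto; try lia.
  exfalso; eauto.
Qed.

Lemma count_shift F a L : count_in F a L = count_in (fun n => F (a+n)%nat) 0 L.
Proof. induction L; simpl; try rewrite IHL; auto. Qed.

Lemma count_S F L : (count_in F 0 L <= count_in F 1 L + 1)%nat /\ (count_in F 1 L <= count_in F 0 L + 1)%nat.
Proof.
  assert (H1 := count_split F 0 1 L). assert (H2 := count_split F 0 L 1).
  replace (1 + L)%nat with (L + 1)%nat in H1 by lia. rewrite H2 in H1.
  assert (count_in F 0 1 <= 1)%nat by apply count_le.
  assert (count_in F (0+L) 1 <= 1)%nat by apply count_le.
  change (0+1)%nat with 1%nat in H1. lia.
Qed.

Section Topo.
Context {X : Type} (d : X -> X -> R) (Hd : is_metric d).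

Lemma d_nonneg x y : 0 <= d x y. Proof. apply (proj1 Hd). Qed.
Lemma d_eq0 x y : d x y = 0 <-> x = y. Proof. apply (proj1 (proj2 Hd)). Qed.
Lemma d_sym x y : d x y = d y x. Proof. apply (proj1 (proj2 (proj2 Hd))). Qed.
Lemma d_tri x y z : d x z <= d x y + d y z. Proof. apply (proj2 (proj2 (proj2 Hd))). Qed.
Lemma d_xx x : d x x = 0. Proof. apply d_eq0; auto. Qed.

Lemma d_pos x y : x <> y -> 0 < d x y.
Proof. intro H. destruct (d_nonneg x y) as [h|h]; auto. exfalso; apply H, d_eq0; auto. Qed.

Lemma d_small_eq x y : (forall e, 0 < e -> d x y < e) -> x = y.
Proof.
  intro H. destruct (classic (x = y)) as [|n]; auto.
  assert (h := d_pos x y n). specialize (H _ h). lra.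
Qed.

Lemma open_ball c r : open_set d (fun y => d c y < r).
Proof.
  intros x Hx. exists (r - d c x). split; [lra|].
  intros y Hy. assert (h := d_tri c x y). lra.
Qed.

Lemma open_ball' c r : open_set d (fun y => d y c < r).
Proof.
  intros x Hx. exists (r - d x c). split; [lra|].
  intros y Hy. assert (h := d_tri y x c). rewrite (d_sym y x) in h. lra.
Qed.

Lemma open_empty : open_set d (fun _ => False).
Proof. intros x []. Qed.

Lemma open_True : open_set d (fun _ => True).
Proof. intros x _. exists 1; split; auto; lra. Qed.

Lemma open_ext (U V : X -> Prop) : (forall x, U x <-> V x) -> open_set d U -> open_set d V.
Proof. intros H; rewrite (set_ext U V H); auto. Qed.

Lemma open_union {I : Type} (U : I -> X -> Prop) : (forall i, open_set d (U i)) ->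
  open_set d (fun x => exists i, U i x).
Proof.
  intros H x [i Hi]. destruct (H i x Hi) as [r [Hr H']]. exists r; split; auto.
  intros y Hy; exists i; auto.
Qed.

Lemma open_inter U V : open_set d U -> open_set d V -> open_set d (fun x => U x /\ V x).
Proof.
  intros HU HV x [Ux Vx]. destruct (HU x Ux) as [r1 [H1 H1']]. destruct (HV x Vx) as [r2 [H2 H2']].
  exists (Rmin r1 r2). split. apply Rmin_pos; auto.
  intros y Hy. split; [apply H1' | apply H2']; eapply Rlt_le_trans; eauto; [apply Rmin_l|apply Rmin_r].
Qed.

Lemma closed_compl_open U : open_set d U -> closed_set d (fun x => ~ U x).
Proof.
  intros H. unfold closed_set. eapply open_ext; [|exact H]. intro x; split; intro h; [intro h'; auto| apply NNPP; auto].
Qed.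

Lemma closed_ext (U V : X -> Prop) : (forall x, U x <-> V x) -> closed_set d U -> closed_set d V.
Proof. intros H; rewrite (set_ext U V H); auto. Qed.

Lemma closed_cball c r : closed_set d (fun y => d y c <= r).
Proof.
  intros x Hx. exists (d x c - r). split; [lra|].
  intros y Hy Hy'. assert (h := d_tri x y c). lra.
Qed.

Lemma closed_ge c r : closed_set d (fun y => r <= d y c).
Proof.
  eapply closed_ext; [|apply closed_compl_open, (open_ball' c r)].
  intro x; split; intro h; lra.
Qed.

Lemma closed_point c : closed_set d (fun y => y = c).
Proof.
  intros x Hx. exists (d x c). split. apply d_pos; auto.
  intros y Hy Hy'. subst. lra.
Qed.

Lemma closed_empty : closed_set d (fun _ => False).
Proof. apply (closed_ext (fun x => ~ True)); [tauto|]. apply closed_compl_open, open_True. Qed.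

Lemma closed_union2 U V : closed_set d U -> closed_set d V -> closed_set d (fun x => U x \/ V x).
Proof.
  intros HU HV. unfold closed_set. eapply open_ext; [|apply (open_inter _ _ HU HV)].
  intros x; tauto.
Qed.

Lemma closed_inter {I : Type} (U : I -> X -> Prop) : (forall i, closed_set d (U i)) ->
  closed_set d (fun x => forall i, U i x).
Proof.
  intros H. unfold closed_set. eapply open_ext; [|apply (open_union (fun i x => ~ U i x) H)].
  intros x; split; [intros [i Hi] h; auto | intro h; apply not_all_ex_not; auto].
Qed.

Lemma closed_inter2 U V : closed_set d U -> closed_set d V -> closed_set d (fun x => U x /\ V x).
Proof.
  intros HU HV. apply (closed_ext (fun x => forall b : bool, if b then U x else V x)).
  - intro x; split; [intro h; split; [apply (h true)|apply (h false)] | intros [h1 h2] []; auto].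
  - apply closed_inter; intros []; auto.
Qed.

Lemma open_preimage (g : X -> X) U : continuous_map d g -> open_set d U -> open_set d (fun x => U (g x)).
Proof.
  intros Hg HU x Ux. destruct (HU _ Ux) as [r [Hr H]]. destruct (Hg x r Hr) as [del [Hdel H']].
  exists del; split; auto.
Qed.

Lemma closed_preimage (g : X -> X) U : continuous_map d g -> closed_set d U -> closed_set d (fun x => U (g x)).
Proof. intros Hg HU. unfold closed_set. apply (open_preimage g _ Hg HU). Qed.

Lemma cont_id : continuous_map d (fun x => x).
Proof. intros x e He. exists e; auto. Qed.

Lemma cont_comp f g : continuous_map d f -> continuous_map d g -> continuous_map d (fun x => f (g x)).
Proof.
  intros Hf Hg x e He. destruct (Hf (g x) e He) as [e1 [He1 H1]]. destruct (Hg x e1 He1) as [e2 [He2 H2]].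
  exists e2; split; auto.
Qed.

Lemma closed_limit U x : closed_set d U -> (forall r, 0 < r -> exists y, U y /\ d x y < r) -> U x.
Proof.
  intros HU H. apply NNPP; intro Hn. destruct (HU x Hn) as [r [Hr Hr']].
  destruct (H r Hr) as [y [Uy Hy]]. apply (Hr' y Hy Uy).
Qed.

Context (Hcpt : compact_space d).

Fixpoint somes {I : Type} (l : list (option I)) : list I :=
  match l with nil => nil | Some i :: l' => i :: somes l' | None :: l' => somes l' end.

Lemma in_somes {I : Type} (l : list (option I)) i : In (Some i) l -> In i (somes l).
Proof. induction l as [|[j|] l IH]; simpl; auto; intros [h|h]; try discriminate; auto. inversion h; auto. Qed.

Lemma compact_closed (K : X -> Prop) {I : Type} (V : I -> X -> Prop) :
  closed_set d K -> (forall i, open_set d (V i)) -> (forall x, K x -> exists i, V i x) ->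
  exists l : list I, forall x, K x -> exists i, In i l /\ V i x.
Proof.
  intros HK HV Hc.
  destruct (Hcpt (option I) (fun o => match o with None => fun x => ~ K x | Some i => V i end)) as [l Hl].
  - intros [i|]; auto.
  - intro x. destruct (classic (K x)) as [h|h]. destruct (Hc x h) as [i Hi]. exists (Some i); auto. exists None; auto.
  - exists (somes l). intros x Kx. destruct (Hl x) as [[i|] [H1 H2]]. exists i; split; auto. apply in_somes; auto.
    contradiction.
Qed.

Lemma nets e : 0 < e -> exists l : list X, forall x, exists c, In c l /\ d x c < e.
Proof.
  intros He. destruct (Hcpt X (fun c x => d x c < e)) as [l Hl].
  - intro c; apply open_ball'.
  - intro x; exists x. rewrite d_xx; auto.
  - exists l; auto.
Qed.

Definition maxK (l : list (X * R * nat)%type) : nat := fold_right (fun p m => Nat.max (snd p) m) 0%nat l.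
Lemma maxK_in l p : In p l -> (snd p <= maxK l)%nat.
Proof. induction l; simpl; [tauto|]. intros [h|h]; subst; [lia|]. specialize (IHl h). lia. Qed.

Lemma cluster (s : nat -> X) : exists u, forall r, 0 < r -> forall K, exists k, (K <= k)%nat /\ d (s k) u < r.
Proof.
  apply NNPP; intro Hn.
  assert (H : forall u, exists r K, 0 < r /\ forall k, (K <= k)%nat -> r <= d (s k) u).
  { intro u. apply NNPP; intro h. apply Hn; exists u. intros r Hr K. apply NNPP; intro h2.
    apply h. exists r, K. split; auto. intros k Hk. apply Rnot_lt_le. intro h3. apply h2. exists k; auto. }
  destruct (Hcpt (X * R * nat)%type (fun p y => let '(u, r, K) := p in
     (0 < r /\ forall k, (K <= k)%nat -> r <= d (s k) u) /\ d u y < r)) as [l Hl].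
  - intros [[u r] K]. destruct (classic (0 < r /\ forall k, (K <= k)%nat -> r <= d (s k) u)) as [h|h].
    + eapply open_ext; [|apply (open_ball u r)]. intro y; simpl; tauto.
    + eapply open_ext; [|apply open_empty]. intro y; simpl; tauto.
  - intro x. destruct (H x) as [r [K [Hr HK]]]. exists (x, r, K). simpl. rewrite d_xx. auto.
  - destruct (Hl (s (maxK l))) as [[[u r] K] [Hin [[Hr HK] Hu]]].
    assert (h := maxK_in _ _ Hin). simpl in h. specialize (HK _ h). rewrite d_sym in Hu. lra.
Qed.

Lemma cluster_sub (s : nat -> X) u : (forall r, 0 < r -> forall K, exists k, (K <= k)%nat /\ d (s k) u < r) ->
  exists sig : nat -> nat, (forall j, (j <= sig j)%nat) /\ forall j, d (s (sig j)) u < / INR (S j).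
Proof.
  intro H.
  assert (H' : forall j, exists k, (j <= k)%nat /\ d (s k) u < / INR (S j)).
  { intro j. apply H. apply Rinv_0_lt_compat. apply lt_0_INR; lia. }
  exists (fun j => proj1_sig (constructive_indefinite_description _ (H' j))).
  split; intro j; destruct (constructive_indefinite_description _ (H' j)) as [k [h1 h2]]; simpl; auto.
Qed.

Lemma inv_small e : 0 < e -> exists J, forall j, (J <= j)%nat -> / INR (S j) < e.
Proof.
  intros He. destruct (archimed (/ e)) as [h _].
  assert (0 <= IZR (up (/e))). { assert (0 < /e) by (apply Rinv_0_lt_compat; auto). lra. }
  exists (Z.to_nat (up (/ e))). intros j Hj.
  assert (Hj' : IZR (up (/e)) <= INR j). { rewrite <- (Z2Nat.id (up (/e))). rewrite <- INR_IZR_INZ. apply le_INR; auto.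
    apply le_IZR; auto. }
  rewrite S_INR. assert (0 < INR j + 1) by (assert (0 <= INR j) by apply pos_INR; lra).
  apply (Rmult_lt_reg_r (INR j + 1)); auto. rewrite Rinv_l by lra.
  apply (Rmult_lt_reg_l (/ e)). apply Rinv_0_lt_compat; auto.
  rewrite Rmult_1_r, <- Rmult_assoc, Rinv_l by lra. lra.
Qed.

Lemma cluster2 (s1 s2 : nat -> X) : exists u v, forall r, 0 < r -> forall K, exists k,
  (K <= k)%nat /\ d (s1 k) u < r /\ d (s2 k) v < r.
Proof.
  destruct (cluster s1) as [u Hu]. destruct (cluster_sub s1 u Hu) as [sig [Hs1 Hs2]].
  destruct (cluster (fun j => s2 (sig j))) as [v Hv]. exists u, v. intros r Hr K.
  destruct (inv_small r Hr) as [J HJ]. destruct (Hv r Hr (Nat.max K J)) as [j [Hj1 Hj2]].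
  exists (sig j). split. specialize (Hs1 j); lia. split; auto.
  eapply Rlt_trans; [apply Hs2|]. apply HJ; lia.
Qed.

End Topo.

Section Borel.
Context {X : Type} (d : X -> X -> R).

Lemma borel_open U : open_set d U -> borel d U.
Proof. intros H S HS HO. auto. Qed.

Lemma borel_compl A : borel d A -> borel d (fun x => ~ A x).
Proof. intros H S HS HO. apply (proj1 (proj2 HS)). apply H; auto. Qed.

Lemma borel_Union (A : nat -> X -> Prop) : (forall n, borel d (A n)) -> borel d (fun x => exists n, A n x).
Proof. intros H S HS HO. apply (proj2 (proj2 HS)). intro n; apply H; auto. Qed.

Lemma borel_True : borel d (fun _ => True).
Proof. intros S HS HO. apply HS. Qed.

Lemma borel_ext A B : (forall x, A x <-> B x) -> borel d A -> borel d B.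
Proof. intros H; rewrite (set_ext A B H); auto. Qed.

Lemma borel_closed C : closed_set d C -> borel d C.
Proof.
  intros H. apply (borel_ext (fun x => ~ ~ C x)). intro x; split; [apply NNPP|tauto].
  apply borel_compl, borel_open, H.
Qed.

Lemma borel_empty : borel d (fun _ => False).
Proof. apply (borel_ext (fun x => ~ True)); [tauto|]. apply borel_compl, borel_True. Qed.

Lemma borel_union2 A B : borel d A -> borel d B -> borel d (fun x => A x \/ B x).
Proof.
  intros HA HB. apply (borel_ext (fun x => exists n : nat, match n with O => A x | _ => B x end)).
  - intro x; split; [intros [[|n] h]; auto | intros [h|h]; [exists O|exists 1%nat]; auto].
  - apply borel_Union. intros [|n]; auto.
Qed.

Lemma borel_inter (A : nat -> X -> Prop) : (forall n, borel d (A n)) -> borel d (fun x => forall n, A n x).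
Proof.
  intros H. apply (borel_ext (fun x => ~ exists n, ~ A n x)).
  - intro x; split; [intros h n; apply NNPP; intro h'; apply h; eauto | intros h [n h']; auto].
  - apply borel_compl, borel_Union; intro n; apply borel_compl, H.
Qed.

Lemma borel_inter2 A B : borel d A -> borel d B -> borel d (fun x => A x /\ B x).
Proof.
  intros HA HB. apply (borel_ext (fun x => ~ (~ A x \/ ~ B x))).
  - intro x; tauto.
  - apply borel_compl, borel_union2; apply borel_compl; auto.
Qed.

Lemma borel_preimage (g : X -> X) A : continuous_map d g -> borel d A -> borel d (fun x => A (g x)).
Proof.
  intros Hg HA. apply (HA (fun B => borel d (fun x => B (g x)))).
  - split; [apply borel_True|split].
    + intros B HB. apply borel_compl; auto.
    + intros B HB. apply (borel_Union (fun n x => B n (g x))); auto.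
  - intros U HU. apply borel_open, open_preimage; auto.
Qed.

End Borel.

Section Measure.
Context {X : Type} (d : X -> X -> R) (mu : prob_measure d).

Lemma pm_ext A B : (forall x, A x <-> B x) -> mu A = mu B.
Proof. intros H; rewrite (set_ext A B H); auto. Qed.

Lemma sum_const_seq c N : sum_f_R0 (fun _ => c) N = INR (S N) * c.
Proof. induction N; simpl sum_f_R0. simpl; lra. rewrite IHN. rewrite (S_INR (S N)). lra. Qed.

Lemma pm_empty : mu (fun _ => False) = 0.
Proof.
  assert (H := pm_sigma mu (fun _ _ => False) (fun _ => borel_empty d) ltac:(tauto)). cbv beta in H.
  rewrite (pm_ext (fun x => exists _ : nat, False) (fun _ => False)) in H by (intro; split; [intros [_ h]; auto|tauto]).
  set (c := mu (fun _ => False)) in *.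
  destruct (Req_dec c 0) as [|hc]; auto. exfalso.
  destruct (H (Rabs c / 2)) as [N HN]. { assert (0 < Rabs c) by (apply Rabs_pos_lt; auto). lra. }
  assert (h1 := HN N ltac:(lia)). assert (h2 := HN (S N) ltac:(lia)).
  unfold Rdist in *. rewrite sum_const_seq in h1, h2. rewrite S_INR in h2.
  assert (h3 : Rabs ((INR (S N) + 1) * c - c - (INR (S N) * c - c)) <= Rabs ((INR (S N) + 1) * c - c) + Rabs (INR (S N) * c - c)).
  { unfold Rminus at 1. rewrite <- (Rabs_Ropp (INR (S N) * c - c)). apply Rabs_triang. }
  replace ((INR (S N) + 1) * c - c - (INR (S N) * c - c)) with c in h3 by ring. lra.
Qed.

Lemma sum_f_R0_zero_tail (f : nat -> R) n N : (n <= N)%nat -> (forall k, (n < k)%nat -> f k = 0) ->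
  sum_f_R0 f N = sum_f_R0 f n.
Proof.
  intros H Hf. induction N. replace n with 0%nat by lia; auto.
  destruct (Nat.eq_dec n (S N)). subst; auto. simpl. rewrite IHN by lia. rewrite Hf by lia. ring.
Qed.

Lemma infinite_sum_finite (f : nat -> R) n l : (forall k, (n < k)%nat -> f k = 0) -> sum_f_R0 f n = l -> infinite_sum f l.
Proof.
  intros Hf Hl e He. exists n. intros N HN. rewrite (sum_f_R0_zero_tail f n N) by auto. rewrite Hl.
  unfold Rdist. rewrite Rminus_diag, Rabs_R0; lra.
Qed.

Lemma pm_add2 A B : borel d A -> borel d B -> (forall x, A x -> B x -> False) ->
  mu (fun x => A x \/ B x) = mu A + mu B.
Proof.
  intros HA HB D.
  set (F := fun n : nat => match n with O => A | 1%nat => B | _ => fun _ => False end).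
  assert (H := pm_sigma mu F ltac:(intros [|[|n]]; simpl; auto; apply borel_empty)
     ltac:(intros [|[|m]] [|[|n]] hmn x; simpl; try tauto; eauto)).
  rewrite (pm_ext (fun x => exists n, F n x) (fun x => A x \/ B x)) in H.
  2: { intro x; split. intros [[|[|n]] h]; simpl in h; tauto. intros [h|h]; [exists O|exists 1%nat]; auto. }
  apply (uniqueness_sum _ _ _ H). apply (infinite_sum_finite _ 1).
  intros [|[|k]] hk; try lia. simpl. apply pm_empty. simpl. ring.
Qed.

Lemma pm_nonneg' A : borel d A -> 0 <= mu A. Proof. apply pm_nonneg. Qed.

Lemma pm_compl A : borel d A -> mu (fun x => ~ A x) = 1 - mu A.
Proof.
  intros HA. rewrite <- (pm_full mu).
  rewrite (pm_ext (fun _ => True) (fun x => A x \/ ~ A x)) by (intro; tauto).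
  rewrite pm_add2; auto. ring. apply borel_compl; auto.
Qed.

Lemma pm_mono A B : borel d A -> borel d B -> (forall x, A x -> B x) -> mu A <= mu B.
Proof.
  intros HA HB H.
  assert (HC : borel d (fun x => B x /\ ~ A x)) by (apply borel_inter2; auto; apply borel_compl; auto).
  assert (E : mu B = mu (fun x => A x \/ (B x /\ ~ A x))).
  { apply pm_ext. intro x; split; [|intros [h|[h _]]; auto]. intro h. destruct (classic (A x)); auto. }
  rewrite E, pm_add2; auto. assert (0 <= mu (fun x => B x /\ ~ A x)) by (apply pm_nonneg; auto). lra.
  intros x h [_ h']; auto.
Qed.

Lemma pm_le1 A : borel d A -> mu A <= 1.
Proof. intro HA. rewrite <- (pm_full mu). apply pm_mono; auto. apply borel_True. Qed.

Lemma pm_full' A : (forall x, A x) -> mu A = 1.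
Proof. intro H. rewrite <- (pm_full mu). apply pm_ext. intro; split; auto. Qed.

Lemma pm_zero' A : (forall x, ~ A x) -> mu A = 0.
Proof. intro H. rewrite <- pm_empty. apply pm_ext. intro x; split; [apply H|intros []]. Qed.

Lemma pm_incr (A : nat -> X -> Prop) : (forall n, borel d (A n)) -> (forall n x, A n x -> A (S n) x) ->
  forall e, 0 < e -> exists N, mu (fun x => exists n, A n x) - e < mu (A N).
Proof.
  intros HA Hinc e He.
  set (D := fun n : nat => match n with O => A O | S m => fun x => A (S m) x /\ ~ A m x end).
  assert (HD : forall n, borel d (D n)). { intros [|n]; simpl; auto. apply borel_inter2; auto. apply borel_compl; auto. }
  assert (Hmono : forall m n, (m <= n)%nat -> forall x, A m x -> A n x).
  { intros m n h; induction h; auto. }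
  assert (Hdisj : forall m n, m <> n -> forall x, D m x -> D n x -> False).
  { intros m n hmn x. destruct m as [|m], n as [|n]; simpl; try lia.
    - intros h [_ h']. apply h', (Hmono 0%nat); auto; lia.
    - intros [_ h'] h. apply h', (Hmono 0%nat); auto; lia.
    - intros [h1 h2] [h3 h4]. destruct (Nat.lt_total m n) as [h|[h|h]]; try lia.
      + apply h4, (Hmono (S m)); auto; lia.
      + apply h2, (Hmono (S n)); auto; lia. }
  assert (Hps : forall N, sum_f_R0 (fun n => mu (D n)) N = mu (A N)).
  { induction N; simpl; auto. rewrite IHN.
    rewrite (pm_ext (A (S N)) (fun x => A N x \/ (A (S N) x /\ ~ A N x))).
    rewrite pm_add2; auto. apply (HD (S N)). intros x h [_ h']; auto.
    intro x; split; [intro h; destruct (classic (A N x)); auto | intros [h|[h _]]; auto]. }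
  assert (H := pm_sigma mu D HD Hdisj).
  rewrite (pm_ext (fun x => exists n, D n x) (fun x => exists n, A n x)) in H.
  - destruct (H e He) as [N HN]. exists N. specialize (HN N ltac:(lia)). rewrite Hps in HN.
    unfold Rdist in HN. apply Rabs_def2 in HN. lra.
  - intro x; split.
    + intros [[|n] h]; simpl in h. exists O; auto. exists (S n); tauto.
    + intros [n h]. induction n. exists O; auto. destruct (classic (A n x)) as [h'|h']; auto. exists (S n); simpl; auto.
Qed.

Lemma pm_decr (B : nat -> X -> Prop) : (forall n, borel d (B n)) -> (forall n x, B (S n) x -> B n x) ->
  (forall x, exists n, ~ B n x) -> forall e, 0 < e -> exists N, mu (B N) < e.
Proof.
  intros HB Hdec Hx e He.
  destruct (pm_incr (fun n x => ~ B n x) ltac:(intro; apply borel_compl; auto)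
     ltac:(intros n x h h'; apply h, Hdec; auto) e He) as [N HN].
  exists N. rewrite pm_full' in HN by auto. rewrite pm_compl in HN; auto. lra.
Qed.

End Measure.

Section Dirac.
Context {X : Type} (d : X -> X -> R).

Definition dirac_f (p : X) (A : X -> Prop) : R := if excluded_middle_informative (A p) then 1 else 0.

Lemma dirac_sigma p (A : nat -> X -> Prop) : (forall m n, m <> n -> forall x, A m x -> A n x -> False) ->
  infinite_sum (fun n => dirac_f p (A n)) (dirac_f p (fun x => exists n, A n x)).
Proof.
  intro D. unfold dirac_f at 2. destruct excluded_middle_informative as [[n0 h0]|hn].
  - apply (infinite_sum_finite _ n0).
    + intros k hk. unfold dirac_f. destruct excluded_middle_informative; auto. exfalso; apply (D n0 k ltac:(lia) p); auto.
    + clear -h0 D.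
      assert (Z : forall k, k <> n0 -> dirac_f p (A k) = 0).
      { intros k hk. unfold dirac_f. destruct excluded_middle_informative; auto. exfalso; apply (D n0 k ltac:(lia) p); auto. }
      assert (H : forall N, (N < n0)%nat -> sum_f_R0 (fun n => dirac_f p (A n)) N = 0).
      { induction N; intro h; simpl. apply Z; lia. rewrite IHN by lia. rewrite Z by lia. ring. }
      assert (E : dirac_f p (A n0) = 1) by (unfold dirac_f; destruct excluded_middle_informative; tauto).
      destruct n0. simpl. auto. simpl. rewrite H by lia. rewrite E. ring.
  - apply (infinite_sum_finite _ 0). intros k hk. unfold dirac_f; destruct excluded_middle_informative; auto.
    exfalso; eauto. simpl. unfold dirac_f; destruct excluded_middle_informative; auto. exfalso; eauto.
Qed.

Definition dirac (p : X) : prob_measure d.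
Proof.
  refine {| pm := dirac_f p |}.
  - intros A _. unfold dirac_f; destruct excluded_middle_informative; lra.
  - unfold dirac_f; destruct excluded_middle_informative; tauto.
  - intros A _ D. apply dirac_sigma; auto.
Defined.

Lemma dirac_val p A : dirac p A = dirac_f p A. Proof. reflexivity. Qed.

End Dirac.

Definition sup_of (E : R -> Prop) : R :=
  match excluded_middle_informative (bound E /\ exists x, E x) with
  | left h => proj1_sig (completeness E (proj1 h) (proj2 h))
  | right _ => 0 end.

Lemma sup_ub (E : R -> Prop) b e : (forall x, E x -> x <= b) -> E e -> e <= sup_of E.
Proof.
  intros Hb He. unfold sup_of. destruct excluded_middle_informative as [h|h].
  - destruct (completeness E _ _) as [m [Hm1 Hm2]]. simpl. apply Hm1; auto.
  - exfalso; apply h. split; eauto. exists b; intros x hx; auto.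
Qed.

Lemma sup_least (E : R -> Prop) b : (exists x, E x) -> (forall x, E x -> x <= b) -> sup_of E <= b.
Proof.
  intros Hne Hb. unfold sup_of. destruct excluded_middle_informative as [h|h].
  - destruct (completeness E _ _) as [m [Hm1 Hm2]]. simpl. apply Hm2. intros x hx; auto.
  - exfalso; apply h. split; eauto. exists b; intros x hx; auto.
Qed.

Definition inf_of (E : R -> Prop) : R := - sup_of (fun r => E (- r)).

Lemma inf_lb (E : R -> Prop) b e : (forall x, E x -> b <= x) -> E e -> inf_of E <= e.
Proof.
  intros Hb He. unfold inf_of. assert (- e <= sup_of (fun r => E (-r))).
  { apply (sup_ub _ (- b)). intros x hx. specialize (Hb _ hx). lra. rewrite Ropp_involutive; auto. }
  lra.
Qed.

Lemma inf_greatest (E : R -> Prop) b : (exists x, E x) -> (forall x, E x -> b <= x) -> b <= inf_of E.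
Proof.
  intros [e He] Hb. unfold inf_of. assert (sup_of (fun r => E (-r)) <= - b).
  { apply sup_least. exists (- e); rewrite Ropp_involutive; auto. intros x hx. specialize (Hb _ hx). lra. }
  lra.
Qed.

Definition lim_of (w : nat -> R) : R := epsilon (inhabits 0) (fun L => Un_cv w L).

Lemma lim_of_spec w : (exists L, Un_cv w L) -> Un_cv w (lim_of w).
Proof. intro H. unfold lim_of. apply epsilon_spec; auto. Qed.

Lemma Un_cv_le_eps (a b c : nat -> R) A B : (forall k, a k <= b k + c k) -> Un_cv a A -> Un_cv b B -> Un_cv c 0 -> A <= B.
Proof.
  intros H Ha Hb Hc. apply Rnot_lt_le; intro hlt. set (e := (A - B) / 3).
  assert (He : e > 0) by (unfold e; lra).
  destruct (Ha e He) as [N1 H1]. destruct (Hb e He) as [N2 H2]. destruct (Hc e He) as [N3 H3].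
  set (k := (N1 + N2 + N3)%nat). specialize (H1 k ltac:(unfold k; lia)). specialize (H2 k ltac:(unfold k; lia)).
  specialize (H3 k ltac:(unfold k; lia)). unfold Rdist in *. specialize (H k).
  apply Rabs_def2 in H1; apply Rabs_def2 in H2; apply Rabs_def2 in H3. unfold e in *. lra.
Qed.

Lemma Un_cv_le (a b : nat -> R) A B : (forall k, a k <= b k) -> Un_cv a A -> Un_cv b B -> A <= B.
Proof.
  intros H Ha Hb. apply (Un_cv_le_eps a b (fun _ => 0) A B); auto. intro k; specialize (H k); lra.
  intros e He; exists O; intros; unfold Rdist; rewrite Rminus_diag, Rabs_R0; lra.
Qed.

Lemma Un_cv_const c : Un_cv (fun _ => c) c.
Proof. intros e He; exists O; intros; unfold Rdist; rewrite Rminus_diag, Rabs_R0; lra. Qed.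

Lemma Un_cv_ge_const (a : nat -> R) c A : (forall k, c <= a k) -> Un_cv a A -> c <= A.
Proof. intros H Ha. apply (Un_cv_le (fun _ => c) a); auto. apply Un_cv_const. Qed.

Lemma Un_cv_le_const (a : nat -> R) c A : (forall k, a k <= c) -> Un_cv a A -> A <= c.
Proof. intros H Ha. apply (Un_cv_le a (fun _ => c)); auto. apply Un_cv_const. Qed.

Lemma Un_cv_inv_sub (phi : nat -> nat) : (forall k, (k <= phi k)%nat) -> Un_cv (fun k => / INR (S (phi k))) 0.
Proof.
  intros Hphi e He. destruct (inv_small e He) as [J HJ]. exists J. intros n Hn. unfold Rdist.
  rewrite Rminus_0_r. rewrite Rabs_right. apply HJ. specialize (Hphi n); lia.
  left; apply Rinv_0_lt_compat, lt_0_INR; lia.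
Qed.

Definition sincr (s : nat -> nat) := forall k, (s k < s (S k))%nat.

Lemma sincr_ge s : sincr s -> forall k, (k <= s k)%nat.
Proof. intros H k; induction k; [lia|]. specialize (H k); lia. Qed.

Lemma sincr_mono s : sincr s -> forall m n, (m <= n)%nat -> (s m <= s n)%nat.
Proof. intros H m n h; induction h; auto. specialize (H m0); lia. Qed.

Lemma sincr_lt s : sincr s -> forall m n, (m < n)%nat -> (s m < s n)%nat.
Proof. intros H m n h. assert (h1 := sincr_mono s H (S m) n h). specialize (H m); lia. Qed.

Lemma Un_cv_sub (w : nat -> R) L (rho : nat -> nat) : Un_cv w L -> (forall k, (k <= rho k)%nat) ->
  forall i, exists M, forall k, (M <= k)%nat -> Rdist (w (rho k)) L < i -> True.
Proof. intros; exists O; auto. Qed.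

Lemma BW01 (v : nat -> R) : exists s, sincr s /\ ((forall k, 0 <= v k <= 1) -> exists L, Un_cv (fun k => v (s k)) L).
Proof.
  destruct (classic (forall k, 0 <= v k <= 1)) as [Hb|Hb].
  2: { exists (fun k => k). split; [intro; lia| tauto]. }
  destruct (Bolzano_Weierstrass v _ (compact_P3 0 1) Hb) as [l Hl].
  assert (Hn : forall N k, exists p, (N <= p)%nat /\ Rabs (v p - l) < / INR (S k)).
  { intros N k. assert (hp : 0 < / INR (S k)) by (apply Rinv_0_lt_compat, lt_0_INR; lia).
    destruct (Hl (disc l (mkposreal _ hp)) N) as [p [h1 h2]].
    - exists (mkposreal _ hp). intros y hy; auto.
    - exists p; split; auto. }
  set (nx := fun N k => proj1_sig (constructive_indefinite_description _ (Hn N k))).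
  assert (Hnx : forall N k, (N <= nx N k)%nat /\ Rabs (v (nx N k) - l) < / INR (S k)).
  { intros; unfold nx; destruct constructive_indefinite_description; auto. }
  set (s := fix s k := match k with O => nx O O | S k' => nx (S (s k')) k end).
  exists s. split.
  - intro k. simpl. destruct (Hnx (S (s k)) (S k)); lia.
  - intros _. exists l. intros e He. destruct (inv_small e He) as [J HJ]. exists J. intros n hn.
    unfold Rdist. assert (h : Rabs (v (s n) - l) < / INR (S n)).
    { destruct n; simpl; apply Hnx. }
    eapply Rlt_trans; [apply h| apply HJ; lia].
Qed.

Definition subseq (v : nat -> R) : nat -> nat := proj1_sig (constructive_indefinite_description _ (BW01 v)).
Lemma subseq_spec v : sincr (subseq v) /\ ((forall k, 0 <= v k <= 1) -> exists L, Un_cv (fun k => v (subseq v k)) L).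
Proof. unfold subseq; destruct constructive_indefinite_description; auto. Qed.

Lemma diagonal (u : nat -> nat -> R) : (forall i k, 0 <= u i k <= 1) ->
  exists phi, sincr phi /\ forall i, exists L, Un_cv (fun k => u i (phi k)) L.
Proof.
  intros Hu.
  set (Phi := fix Phi i := match i with
              | O => subseq (u O)
              | S i' => fun t => Phi i' (subseq (fun t => u (S i') (Phi i' t)) t) end).
  assert (HPhi : forall i, sincr (Phi i)).
  { induction i; simpl. apply subseq_spec. intro k. apply sincr_lt; auto. apply subseq_spec. }
  assert (Hcv : forall i, exists L, Un_cv (fun k => u i (Phi i k)) L).
  { destruct i; simpl. apply subseq_spec; auto. apply (proj2 (subseq_spec (fun t => u (S i) (Phi i t)))); auto. }
  assert (Hrho : forall i j, exists rho, (forall t, (t <= rho t)%nat) /\ forall t, Phi (i + j)%nat t = Phi i (rho t)).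
  { intros i j; induction j.
    - exists (fun t => t); split; intros; try rewrite Nat.add_0_r; auto.
    - destruct IHj as [rho [h1 h2]]. exists (fun t => rho (subseq (fun t => u (S (i + j)) (Phi (i+j)%nat t)) t)).
      split. intro t. eapply Nat.le_trans; [|apply h1]. apply sincr_ge, subseq_spec.
      intro t. replace (i + S j)%nat with (S (i + j)) by lia. simpl. apply h2. }
  exists (fun k => Phi k k). split.
  - intro k. simpl. apply sincr_lt; auto. assert (h := sincr_ge _ (proj1 (subseq_spec (fun t => u (S k) (Phi k t)))) (S k)). lia.
  - intro i. destruct (Hcv i) as [L HL]. exists L. intros e He. destruct (HL e He) as [N HN].
    exists (i + N)%nat. intros k hk. destruct (Hrho i (k - i)%nat) as [rho [h1 h2]].
    replace (i + (k - i))%nat with k in h2 by lia. rewrite h2. apply HN. specialize (h1 k). lia.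
Qed.

Lemma count_all F a L : (forall n, F n) -> count_in F a L = L.
Proof. intro H; induction L; simpl; auto. destruct excluded_middle_informative; [lia|]. exfalso; auto. Qed.

Fixpoint decf (f n : nat) : list nat :=
  match f with O => nil | S f' => match n with O => nil | S m => let '(h, t) := Cantor.of_nat m in h :: decf f' t end end.
Definition dec n := decf n n.
Fixpoint enc (l : list nat) : nat := match l with nil => O | h :: t => S (Cantor.to_nat (h, enc t)) end.

Lemma decf_enc l f : (enc l <= f)%nat -> decf f (enc l) = l.
Proof.
  revert f; induction l as [|h t IH]; intros f hf; cbn [enc] in *.
  - destruct f; auto.
  - destruct f as [|f]; [lia|]. cbn [decf]. rewrite Cantor.cancel_of_to. f_equal. apply IH.
    assert (h1 := Cantor.to_nat_non_decreasing h (enc t)). lia.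
Qed.

Lemma dec_enc l : dec (enc l) = l.
Proof. apply decf_enc; auto. Qed.

Fixpoint sumN (f : nat -> R) (N : nat) : R := match N with O => 0 | S n => sumN f n + f n end.

Lemma sumN_le f g N : (forall n, f n <= g n) -> sumN f N <= sumN g N.
Proof. intro H; induction N; simpl. lra. specialize (H N); lra. Qed.

Lemma sumN_plus f g N : sumN (fun n => f n + g n) N = sumN f N + sumN g N.
Proof. induction N; simpl. lra. rewrite IHN; lra. Qed.

Lemma sumN_geo e N : sumN (fun n => e * / 2 ^ (S n)) N = e * (1 - / 2 ^ N).
Proof.
  induction N; cbn [sumN]. simpl. field. rewrite IHN. simpl pow.
  assert (2 ^ N <> 0) by (apply pow_nonzero; lra). field; auto.
Qed.

Lemma sum_f_R0_sumN f N : sum_f_R0 f N = sumN f (S N).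
Proof. induction N; simpl. lra. simpl in IHN. rewrite IHN. auto. Qed.

Section KB1.
Context {X : Type} (d : X -> X -> R) (Hd : is_metric d) (Hcpt : compact_space d) (T : X -> X)
  (HT : continuous_map d T) (x0 : X).

Lemma inv_S_pos k : 0 < / INR (S k). Proof. apply Rinv_0_lt_compat, lt_0_INR; lia. Qed.

Definition net (k : nat) : list X := proj1_sig (constructive_indefinite_description _ (nets d Hd Hcpt _ (inv_S_pos k))).
Lemma net_spec k x : exists c, In c (net k) /\ d x c < / INR (S k).
Proof. unfold net; destruct constructive_indefinite_description; simpl; auto. Qed.

Definition ctr (n : nat) : X := let '(a, r) := Cantor.of_nat n in let '(k, j) := Cantor.of_nat a in nth j (net k) x0.
Definition rad (n : nat) : R := let '(a, r) := Cantor.of_nat n in / INR (S r).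

Lemma rad_pos n : 0 < rad n. Proof. unfold rad. destruct (Cantor.of_nat n). apply inv_S_pos. Qed.

Definition ball i x := d x (ctr i) < rad i.
Definition cball i x := d x (ctr i) <= rad i.
Definition U (l : list nat) (x : X) := exists i, In i l /\ ball i x.
Definition CU (l : list nat) (x : X) := exists i, In i l /\ cball i x.

Lemma U_CU l x : U l x -> CU l x.
Proof. intros [i [h1 h2]]; exists i; split; auto; unfold cball, ball in *; lra. Qed.

Lemma open_U l : open_set d (U l).
Proof.
  apply (open_ext d (fun x => exists p : {i | In i l}, ball (proj1_sig p) x)).
  - intro x; split. intros [[i h] h']; exists i; auto. intros [i [h h']]; exists (exist _ i h); auto.
  - apply open_union; intros [i h]. apply open_ball'; auto.
Qed.

Lemma closed_CU l : closed_set d (CU l).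
Proof.
  induction l as [|i l IH].
  - eapply closed_ext; [|apply closed_empty; auto]. intro x; split; [tauto|intros [i [[] _]]].
  - eapply closed_ext; [|apply (closed_union2 d _ _ (closed_cball d Hd (ctr i) (rad i)) IH)].
    intro x; split. intros [h|[j [h1 h2]]]. exists i; split; simpl; auto. exists j; split; simpl; auto.
    intros [j [[h1|h1] h2]]; subst; [left|right]; auto. exists j; auto.
Qed.

Lemma U_app l1 l2 x : U (l1 ++ l2) x <-> U l1 x \/ U l2 x.
Proof.
  split. intros [i [h1 h2]]. apply in_app_or in h1. destruct h1; [left|right]; exists i; auto.
  intros [[i [h1 h2]]|[i [h1 h2]]]; exists i; split; auto; apply in_or_app; auto.
Qed.

Lemma CU_app l1 l2 x : CU (l1 ++ l2) x <-> CU l1 x \/ CU l2 x.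
Proof.
  split. intros [i [h1 h2]]. apply in_app_or in h1. destruct h1; [left|right]; exists i; auto.
  intros [[i [h1 h2]]|[i [h1 h2]]]; exists i; split; auto; apply in_or_app; auto.
Qed.

Lemma basic_nbhd x G : open_set d G -> G x -> exists i, ball i x /\ forall y, cball i y -> G y.
Proof.
  intros HG Gx. destruct (HG x Gx) as [s [Hs H]].
  destruct (inv_small (s / 2) ltac:(lra)) as [J HJ]. specialize (HJ J ltac:(lia)).
  destruct (net_spec J x) as [c [hc1 hc2]]. destruct (In_nth _ _ x0 hc1) as [j [_ hj]].
  set (i := Cantor.to_nat (Cantor.to_nat (J, j), J)).
  assert (Hc : ctr i = c). { unfold ctr, i. rewrite !Cantor.cancel_of_to. auto. }
  assert (Hr : rad i = / INR (S J)). { unfold rad, i. rewrite !Cantor.cancel_of_to. auto. }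
  exists i. unfold ball, cball. rewrite Hc, Hr. split; auto. intros y hy. apply H.
  assert (h := d_tri d Hd x c y). rewrite (d_sym d Hd c y) in h. lra.
Qed.

Lemma cover (K : X -> Prop) (g : X -> X) (Gs : nat -> X -> Prop) :
  closed_set d K -> continuous_map d g -> (forall n, open_set d (Gs n)) -> (forall x, K x -> exists n, Gs n (g x)) ->
  exists L : list (nat * nat), (forall x, K x -> exists p, In p L /\ ball (fst p) (g x)) /\
    (forall p, In p L -> forall y, cball (fst p) y -> Gs (snd p) y).
Proof.
  intros HK Hg HG Hc.
  destruct (compact_closed d Hcpt K (fun (p : nat * nat) x => (forall y, cball (fst p) y -> Gs (snd p) y) /\ ball (fst p) (g x)) HK)
    as [L0 HL0].
  - intros [i n]. destruct (classic (forall y, cball i y -> Gs n y)) as [h|h].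
    + eapply open_ext; [|apply (open_preimage d g _ Hg (open_ball' d Hd (ctr i) (rad i)))]. intro x; simpl; unfold ball; tauto.
    + eapply open_ext; [|apply open_empty]. intro x; simpl; tauto.
  - intros x Kx. destruct (Hc x Kx) as [n Hn]. destruct (basic_nbhd (g x) (Gs n) (HG n) Hn) as [i [h1 h2]].
    exists (i, n); simpl; auto.
  - set (b := fun p : nat * nat => if excluded_middle_informative (forall y, cball (fst p) y -> Gs (snd p) y) then true else false).
    exists (filter b L0). split.
    + intros x Kx. destruct (HL0 x Kx) as [p [h1 [h2 h3]]]. exists p; split; auto. apply filter_In; split; auto.
      unfold b; destruct excluded_middle_informative; tauto.
    + intros p hp. apply filter_In in hp. destruct hp as [_ hp]. unfold b in hp. destruct excluded_middle_informative; auto; discriminate.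
Qed.

Lemma cover1 (K : X -> Prop) (g : X -> X) (G : X -> Prop) :
  closed_set d K -> continuous_map d g -> open_set d G -> (forall x, K x -> G (g x)) ->
  exists l, (forall x, K x -> U l (g x)) /\ (forall y, CU l y -> G y).
Proof.
  intros HK Hg HG Hc. destruct (cover K g (fun _ => G) HK Hg (fun _ => HG) ltac:(intros x h; exists O; auto)) as [L [H1 H2]].
  exists (map fst L). split.
  - intros x Kx. destruct (H1 x Kx) as [p [h1 h2]]. exists (fst p); split; auto. apply in_map; auto.
  - intros y [i [hi hy]]. apply in_map_iff in hi. destruct hi as [p [<- hp]]. apply (H2 p hp y hy).
Qed.

Context (z : X).
Definition visits (P : X -> Prop) N := count_in (fun n => P (iter T n z)) 0 N.
Definition freq (P : X -> Prop) N := INR (visits P (S N)) / INR (S N).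

Lemma freq_01 P N : 0 <= freq P N <= 1.
Proof.
  unfold freq. assert (h := count_le (fun n => P (iter T n z)) 0 (S N)). fold (visits P (S N)) in h.
  apply le_INR in h. assert (0 < INR (S N)) by (apply lt_0_INR; lia). assert (0 <= INR (visits P (S N))) by apply pos_INR.
  split. unfold Rdiv; apply Rmult_le_pos; [lra|left; apply Rinv_0_lt_compat; lra]. apply (Rmult_le_reg_r (INR (S N))); auto. unfold Rdiv. rewrite Rmult_assoc, Rinv_l; lra.
Qed.

Lemma freq_cmp S1 S2 e : (forall N, (visits S1 N <= visits S2 N + e)%nat) -> forall N, freq S1 N <= freq S2 N + INR e * / INR (S N).
Proof.
  intros H N. unfold freq. specialize (H (S N)). apply le_INR in H. rewrite plus_INR in H.
  assert (0 < INR (S N)) by (apply lt_0_INR; lia). unfold Rdiv.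
  apply (Rmult_le_reg_r (INR (S N))); auto. rewrite Rmult_plus_distr_r, !Rmult_assoc, Rinv_l; lra.
Qed.

Definition useq i k := freq (U (dec i)) k.
Definition phi : nat -> nat := proj1_sig (constructive_indefinite_description _ (diagonal useq (fun i k => freq_01 _ k))).
Lemma phi_spec : sincr phi /\ forall i, exists L, Un_cv (fun k => useq i (phi k)) L.
Proof. unfold phi; destruct constructive_indefinite_description; auto. Qed.

Definition Af P k := freq P (phi k).
Definition mB l := lim_of (Af (U l)).

Lemma m_cv l : Un_cv (Af (U l)) (mB l).
Proof.
  unfold mB. apply lim_of_spec. destruct (proj2 phi_spec (enc l)) as [L HL]. exists L. unfold useq in HL.
  rewrite dec_enc in HL. auto.
Qed.

Lemma m_01 l : 0 <= mB l <= 1.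
Proof. split; [apply (Un_cv_ge_const _ _ _ (fun k => proj1 (freq_01 _ _)) (m_cv l))|
               apply (Un_cv_le_const _ _ _ (fun k => proj2 (freq_01 _ _)) (m_cv l))]. Qed.

Lemma m_lim_le S1 S2 l1 l2 e : S1 = U l1 -> S2 = U l2 -> (forall N, (visits S1 N <= visits S2 N + e)%nat) -> mB l1 <= mB l2.
Proof.
  intros -> -> H. apply (Un_cv_le_eps _ _ (fun k => INR e * / INR (S (phi k))) _ _ (fun k => freq_cmp _ _ e H (phi k)) (m_cv l1) (m_cv l2)).
  replace 0 with (INR e * 0) by ring. apply CV_mult. apply Un_cv_const.
  apply Un_cv_inv_sub. apply sincr_ge, phi_spec.
Qed.

Lemma m_mono l1 l2 : (forall x, U l1 x -> U l2 x) -> mB l1 <= mB l2.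
Proof.
  intros H. apply (m_lim_le _ _ l1 l2 0 eq_refl eq_refl). intro N. rewrite Nat.add_0_r. apply count_mono. intros k _; apply H.
Qed.

Lemma m_ext l1 l2 : (forall x, U l1 x <-> U l2 x) -> mB l1 = mB l2.
Proof. intro H; apply Rle_antisym; apply m_mono; intros x; apply H. Qed.

Lemma visits_T (P : X -> Prop) N : (visits P N <= visits (fun x => P (T x)) N + 1)%nat /\ (visits (fun x => P (T x)) N <= visits P N + 1)%nat.
Proof.
  unfold visits. assert (E : count_in (fun n => P (T (iter T n z))) 0 N = count_in (fun n => P (iter T n z)) 1 N).
  { rewrite (count_shift _ 1). reflexivity. }
  rewrite E. apply count_S.
Qed.

Lemma m_T1 l1 l2 : (forall x, U l1 (T x) -> U l2 x) -> mB l1 <= mB l2.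
Proof.
  intro H. apply (m_lim_le _ _ l1 l2 1 eq_refl eq_refl). intro N.
  destruct (visits_T (U l1) N) as [h _]. assert (visits (fun x => U l1 (T x)) N <= visits (U l2) N)%nat.
  { apply count_mono; intros k _; apply H. } lia.
Qed.

Lemma m_T2 l1 l2 : (forall x, U l1 x -> U l2 (T x)) -> mB l1 <= mB l2.
Proof.
  intro H. apply (m_lim_le _ _ l1 l2 1 eq_refl eq_refl). intro N.
  destruct (visits_T (U l2) N) as [_ h]. assert (visits (U l1) N <= visits (fun x => U l2 (T x)) N)%nat.
  { apply count_mono; intros k _; apply H. } lia.
Qed.



Lemma freq_union S1 S2 N : freq (fun x => S1 x \/ S2 x) N <= freq S1 N + freq S2 N.
Proof.
  unfold freq, visits. assert (h := count_union (fun n => S1 (iter T n z)) (fun n => S2 (iter T n z)) 0 (S N)).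
  apply le_INR in h. rewrite plus_INR in h. unfold Rdiv. rewrite <- Rmult_plus_distr_r.
  apply Rmult_le_compat_r; auto. left; apply inv_S_pos.
Qed.

Lemma freq_union_disj S1 S2 N : (forall x, S1 x -> S2 x -> False) -> freq (fun x => S1 x \/ S2 x) N = freq S1 N + freq S2 N.
Proof.
  intro D. unfold freq, visits. rewrite (count_union_disj (fun n => S1 (iter T n z)) (fun n => S2 (iter T n z))).
  rewrite plus_INR. unfold Rdiv. ring. intros n; apply D.
Qed.

Lemma m_app l1 l2 : mB (l1 ++ l2) <= mB l1 + mB l2.
Proof.
  apply (Un_cv_le (Af (U (l1 ++ l2))) (fun k => Af (U l1) k + Af (U l2) k)); [|apply m_cv|apply CV_plus; apply m_cv].
  intro k. unfold Af. rewrite (set_ext (U (l1 ++ l2)) (fun x => U l1 x \/ U l2 x)) by apply U_app. apply freq_union.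
Qed.

Lemma m_app_disj l1 l2 : (forall x, U l1 x -> U l2 x -> False) -> mB (l1 ++ l2) = mB l1 + mB l2.
Proof.
  intro D. apply (UL_sequence (Af (U (l1 ++ l2)))). apply m_cv.
  apply (Un_cv_ext (fun k => Af (U l1) k + Af (U l2) k)). 2: apply CV_plus; apply m_cv.
  intro k. unfold Af. rewrite (set_ext (U (l1 ++ l2)) (fun x => U l1 x \/ U l2 x)) by apply U_app.
  rewrite freq_union_disj; auto.
Qed.

Lemma m_all l : (forall x, U l x) -> mB l = 1.
Proof.
  intro H. apply (UL_sequence (Af (U l))). apply m_cv.
  apply (Un_cv_ext (fun _ => 1)). 2: apply Un_cv_const.
  intro k. unfold Af, freq, visits. rewrite count_all by auto. field. apply not_0_INR; lia.
Qed.

Lemma m_nil : mB nil = 0.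
Proof.
  apply (UL_sequence (Af (U nil))). apply m_cv.
  apply (Un_cv_ext (fun _ => 0)). 2: apply Un_cv_const.
  intro k. unfold Af, freq, visits. rewrite (count_ext _ (fun _ => False)).
  2: { intros; split; [intros [i [[] _]]|tauto]. }
  assert (E : forall L, count_in (fun _ : nat => False) 0 L = 0%nat).
  { induction L; simpl; auto. destruct excluded_middle_informative; [tauto|lia]. }
  rewrite E. simpl. unfold Rdiv; ring.
Qed.


(** ** the content lam on open sets *)
Definition lam (G : X -> Prop) : R := sup_of (fun r => exists l, (forall y, CU l y -> G y) /\ r = mB l).

Lemma lam_ub G l : (forall y, CU l y -> G y) -> mB l <= lam G.
Proof. intro H. apply (sup_ub _ 1). intros r [l' [_ ->]]; apply m_01. exists l; auto. Qed.

Lemma lam_least G b : (forall l, (forall y, CU l y -> G y) -> mB l <= b) -> lam G <= b.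
Proof.
  intro H. apply sup_least. exists (mB nil), nil. split; auto. intros y [i [[] _]].
  intros r [l [h ->]]. auto.
Qed.

Lemma lam_01 G : 0 <= lam G <= 1.
Proof.
  split. rewrite <- m_nil. apply lam_ub. intros y [i [[] _]]. apply lam_least. intros; apply m_01.
Qed.

Lemma lam_mono G1 G2 : (forall x, G1 x -> G2 x) -> lam G1 <= lam G2.
Proof. intro H. apply lam_least. intros l hl. apply lam_ub. auto. Qed.

Definition out (A : X -> Prop) : R := inf_of (fun r => exists G, open_set d G /\ (forall x, A x -> G x) /\ r = lam G).

Lemma out_le_lam A G : open_set d G -> (forall x, A x -> G x) -> out A <= lam G.
Proof. intros HG H. apply (inf_lb _ 0). intros r [G' [_ [_ ->]]]; apply lam_01. exists G; auto. Qed.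

Lemma out_greatest A b : (forall G, open_set d G -> (forall x, A x -> G x) -> b <= lam G) -> b <= out A.
Proof.
  intro H. apply inf_greatest. exists (lam (fun _ => True)), (fun _ => True). split; auto. apply open_True.
  intros r [G [h1 [h2 ->]]]; auto.
Qed.

Lemma out_01 A : 0 <= out A <= 1.
Proof.
  split. apply out_greatest; intros; apply lam_01.
  eapply Rle_trans; [apply (out_le_lam A (fun _ => True)); auto; apply open_True|apply lam_01].
Qed.

Lemma out_mono A B : (forall x, A x -> B x) -> out A <= out B.
Proof. intro H. apply out_greatest. intros G HG HB. apply out_le_lam; auto. Qed.

Lemma out_ext A B : (forall x, A x <-> B x) -> out A = out B.
Proof. intro H. rewrite (set_ext A B H); auto. Qed.

Lemma out_open G : open_set d G -> out G = lam G.
Proof.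
  intro HG. apply Rle_antisym. apply out_le_lam; auto. apply out_greatest. intros; apply lam_mono; auto.
Qed.

Lemma lam_empty : lam (fun _ => False) = 0.
Proof.
  apply Rle_antisym; [|apply lam_01]. apply lam_least. intros l hl.
  rewrite <- m_nil. apply m_mono. intros x hx. apply U_CU in hx. apply hl in hx. contradiction.
Qed.

Lemma out_empty : out (fun _ => False) = 0.
Proof. rewrite out_open. apply lam_empty. apply open_empty. Qed.

Lemma lam_sub (Gs : nat -> X -> Prop) l : (forall n, open_set d (Gs n)) -> (forall y, CU l y -> exists n, Gs n y) ->
  exists N, mB l <= sumN (fun n => lam (Gs n)) N.
Proof.
  intros HG Hc. destruct (cover (CU l) (fun x => x) Gs (closed_CU l) (cont_id d) HG Hc) as [L [H1 H2]].
  set (W := fun N' => map fst (filter (fun p => Nat.ltb (snd p) N') L)).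
  assert (HW : forall N', mB (W N') <= sumN (fun n => lam (Gs n)) N').
  { induction N'; simpl sumN.
    - unfold W. assert (E : forall L0 : list (nat * nat), filter (fun p => Nat.ltb (snd p) 0) L0 = nil).
      { clear. induction L0 as [|p L0 IH]; simpl; auto. }
      rewrite E. simpl. rewrite m_nil; lra.
    - set (ln := map fst (filter (fun p => Nat.eqb (snd p) N') L)).
      assert (E : forall x, U (W (S N')) x <-> U (W N' ++ ln) x).
      { intro x. rewrite U_app. unfold U, W, ln. split.
        - intros [i [hi hb]]. apply in_map_iff in hi. destruct hi as [p [<- hp]]. apply filter_In in hp. destruct hp as [hp hlt].
          apply Nat.ltb_lt in hlt. destruct (Nat.eq_dec (snd p) N') as [e|e].
          + right. exists (fst p); split; auto. apply in_map. apply filter_In; split; auto. apply Nat.eqb_eq; auto.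
          + left. exists (fst p); split; auto. apply in_map. apply filter_In; split; auto. apply Nat.ltb_lt; lia.
        - intros [[i [hi hb]]|[i [hi hb]]]; apply in_map_iff in hi; destruct hi as [p [<- hp]]; apply filter_In in hp;
          destruct hp as [hp hlt]; exists (fst p); split; auto; apply in_map; apply filter_In; split; auto.
          apply Nat.ltb_lt in hlt; apply Nat.ltb_lt; lia. apply Nat.eqb_eq in hlt; apply Nat.ltb_lt; lia. }
      rewrite (m_ext _ _ E). eapply Rle_trans; [apply m_app|]. apply Rplus_le_compat; auto.
      apply lam_ub. intros y [i [hi hy]]. unfold ln in hi. apply in_map_iff in hi. destruct hi as [p [<- hp]].
      apply filter_In in hp. destruct hp as [hp he]. apply Nat.eqb_eq in he. rewrite <- he. apply (H2 p hp y hy). }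
  set (N := S (fold_right (fun p n => Nat.max (snd p) n) 0%nat L)).
  assert (HN : forall p, In p L -> (snd p < N)%nat).
  { intros p hp. unfold N. clear -hp. induction L as [|q L IH]; simpl in *; [tauto|]. destruct hp as [<-|hp]. lia.
    specialize (IH hp). lia. }
  exists N. eapply Rle_trans; [|apply HW]. apply m_mono. intros x hx. apply U_CU in hx.
  destruct (H1 x hx) as [p [hp hb]]. exists (fst p). split; auto. unfold W. apply in_map. apply filter_In; split; auto.
  apply Nat.ltb_lt; auto.
Qed.

Lemma out_approx A e : 0 < e -> exists G, open_set d G /\ (forall x, A x -> G x) /\ lam G < out A + e.
Proof.
  intro He. apply NNPP; intro H.
  assert (out A + e <= out A); [|lra].
  apply out_greatest. intros G HG HA. apply Rnot_lt_le. intro h. apply H; exists G; auto.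
Qed.

Lemma out_csub (A : nat -> X -> Prop) Sb : (forall N, sumN (fun n => out (A n)) N <= Sb) ->
  out (fun x => exists n, A n x) <= Sb.
Proof.
  intro HS. apply Rnot_lt_le; intro hlt. set (e := out (fun x => exists n, A n x) - Sb).
  assert (He : 0 < e) by (unfold e; lra).
  assert (Hn : forall n, exists G, open_set d G /\ (forall x, A n x -> G x) /\ lam G < out (A n) + e / 2 * / 2 ^ (S n)).
  { intro n. apply out_approx. apply Rmult_lt_0_compat. lra. apply Rinv_0_lt_compat, pow_lt; lra. }
  set (Gs := fun n => proj1_sig (constructive_indefinite_description _ (Hn n))).
  assert (HGs : forall n, open_set d (Gs n) /\ (forall x, A n x -> Gs n x) /\ lam (Gs n) < out (A n) + e / 2 * / 2 ^ (S n)).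
  { intro n; unfold Gs; destruct constructive_indefinite_description; auto. }
  assert (H1 : lam (fun x => exists n, Gs n x) <= Sb + e / 2).
  { apply lam_least. intros l hl. destruct (lam_sub Gs l (fun n => proj1 (HGs n)) hl) as [N HN].
    eapply Rle_trans; [apply HN|].
    eapply Rle_trans; [apply (sumN_le _ (fun n => out (A n) + e / 2 * / 2 ^ (S n))); intro n; left; apply HGs|].
    rewrite sumN_plus, sumN_geo. specialize (HS N). assert (0 < / 2 ^ N) by (apply Rinv_0_lt_compat, pow_lt; lra). assert (0 < e / 2 * / 2 ^ N) by (apply Rmult_lt_0_compat; lra). lra. }
  assert (H2 : out (fun x => exists n, A n x) <= lam (fun x => exists n, Gs n x)).
  { apply out_le_lam. apply open_union; intro n; apply HGs. intros x [n hx]. exists n; apply HGs; auto. }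
  unfold e in *. lra.
Qed.

Lemma out_sub2 A B : out (fun x => A x \/ B x) <= out A + out B.
Proof.
  set (F := fun n : nat => match n with O => A | 1%nat => B | _ => fun _ => False end).
  rewrite (out_ext _ (fun x => exists n, F n x)).
  - apply out_csub. intro N. destruct N as [|[|N]]; cbn [sumN]. assert (h1 := out_01 A); assert (h2 := out_01 B); simpl; lra.
    simpl. assert (h1 := out_01 A); assert (h2 := out_01 B); lra.
    assert (E : forall k, sumN (fun n => out (F n)) (S (S k)) = out A + out B).
    { induction k. simpl. lra. cbn [sumN] in *. rewrite IHk. simpl F. rewrite out_empty. lra. }
    cbn [sumN] in E. rewrite E. lra.
  - intro x; split. intros [h|h]; [exists O|exists 1%nat]; auto. intros [[|[|n]] h]; simpl in h; tauto.
Qed.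

(** Caratheodory measurability *)
Definition meas (A : X -> Prop) := forall E, out (fun x => E x /\ A x) + out (fun x => E x /\ ~ A x) <= out E.

Lemma meas_eq A E : meas A -> out (fun x => E x /\ A x) + out (fun x => E x /\ ~ A x) = out E.
Proof.
  intro H. apply Rle_antisym; auto. rewrite (out_ext E (fun x => (E x /\ A x) \/ (E x /\ ~ A x))) at 1.
  apply out_sub2. intro x; split; [intro h; destruct (classic (A x)); auto|tauto].
Qed.

Lemma lam_split H G : open_set d H -> open_set d G -> lam (fun x => H x /\ G x) + out (fun x => H x /\ ~ G x) <= lam H.
Proof.
  intros HH HG.
  assert (K : forall l1, (forall y, CU l1 y -> H y /\ G y) -> mB l1 + out (fun x => H x /\ ~ G x) <= lam H).
  { intros l1 hl1. set (H' := fun x => H x /\ ~ CU l1 x).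
    assert (HH' : open_set d H') by (apply open_inter; auto; apply (closed_CU l1)).
    assert (h1 : out (fun x => H x /\ ~ G x) <= lam H').
    { apply out_le_lam; auto. intros x [h h']; split; auto. intro hc; apply h'; apply hl1; auto. }
    assert (h2 : lam H' <= lam H - mB l1).
    { apply lam_least. intros l2 hl2.
      assert (D : forall x, U l1 x -> U l2 x -> False).
      { intros x h h'. apply U_CU in h. apply U_CU in h'. apply hl2 in h'. destruct h'; auto. }
      assert (E := m_app_disj l1 l2 D). assert (lam H >= mB (l1 ++ l2)); [|lra].
      apply Rle_ge, lam_ub. intros y hy. apply CU_app in hy. destruct hy as [hy|hy]; [apply hl1|apply hl2]; auto. }
    lra. }
  assert (lam (fun x => H x /\ G x) <= lam H - out (fun x => H x /\ ~ G x)); [|lra].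
  apply lam_least. intros l hl. specialize (K l hl). lra.
Qed.

Lemma meas_open G : open_set d G -> meas G.
Proof.
  intros HG E. apply out_greatest. intros H HH HE.
  assert (h1 : out (fun x => E x /\ G x) <= lam (fun x => H x /\ G x)).
  { apply out_le_lam. apply open_inter; auto. intros x [h h']; auto. }
  assert (h2 : out (fun x => E x /\ ~ G x) <= out (fun x => H x /\ ~ G x)).
  { apply out_mono. intros x [h h']; auto. }
  assert (h3 := lam_split H G HH HG). lra.
Qed.

Lemma meas_compl A : meas A -> meas (fun x => ~ A x).
Proof.
  intros HA E. rewrite (out_ext (fun x => E x /\ ~ ~ A x) (fun x => E x /\ A x)).
  specialize (HA E). lra. intro x; split; [intros [h h']; split; auto; apply NNPP; auto|tauto].
Qed.

Lemma meas_union2 A B : meas A -> meas B -> meas (fun x => A x \/ B x).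
Proof.
  intros HA HB E.
  assert (h1 : out (fun x => E x /\ (A x \/ B x)) <= out (fun x => E x /\ A x) + out (fun x => (E x /\ ~ A x) /\ B x)).
  { rewrite (out_ext (fun x => E x /\ (A x \/ B x)) (fun x => (E x /\ A x) \/ ((E x /\ ~ A x) /\ B x))). apply out_sub2.
    intro x; split; [intros [h [h'|h']]; [left|destruct (classic (A x))]; auto|tauto]. }
  assert (h2 : out (fun x => E x /\ ~ (A x \/ B x)) = out (fun x => (E x /\ ~ A x) /\ ~ B x)).
  { apply out_ext; intro x; tauto. }
  specialize (HA E). specialize (HB (fun x => E x /\ ~ A x)). lra.
Qed.

Lemma meas_add E A B : meas A -> (forall x, A x -> B x -> False) ->
  out (fun x => E x /\ (A x \/ B x)) = out (fun x => E x /\ A x) + out (fun x => E x /\ B x).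
Proof.
  intros HA D. rewrite <- (meas_eq A (fun x => E x /\ (A x \/ B x)) HA).
  f_equal; apply out_ext; intro x; split; try tauto.
  intros [h h']; split; [tauto|]. intro ha; eapply D; eauto.
Qed.

Definition Bn (A : nat -> X -> Prop) N x := exists n, (n < N)%nat /\ A n x.

Lemma meas_Bn (A : nat -> X -> Prop) N : (forall n, meas (A n)) -> meas (Bn A N).
Proof.
  intro HA. induction N.
  - intro E. rewrite (out_ext (fun x => E x /\ Bn A 0 x) (fun _ => False)), out_empty.
    rewrite (out_ext (fun x => E x /\ ~ Bn A 0 x) E). lra.
    intro x; split; [tauto|]. intro; split; auto. intros [n [hn _]]; lia.
    intro x; split; [intros [_ [n [hn _]]]; lia|tauto].
  - intro E. rewrite (set_ext (Bn A (S N)) (fun x => Bn A N x \/ A N x)). apply meas_union2; auto.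
    intro x; split. intros [n [hn h]]. destruct (Nat.eq_dec n N). subst; auto. left; exists n; split; auto; lia.
    intros [[n [hn h]]|h]; [exists n|exists N]; split; auto; lia.
Qed.

Lemma meas_sum_Bn (A : nat -> X -> Prop) E N : (forall n, meas (A n)) -> (forall m n, m <> n -> forall x, A m x -> A n x -> False) ->
  out (fun x => E x /\ Bn A N x) = sumN (fun n => out (fun x => E x /\ A n x)) N.
Proof.
  intros HA D. induction N; cbn [sumN].
  - rewrite <- out_empty. apply out_ext. intro x; split; [intros [_ [n [hn _]]]; lia|tauto].
  - rewrite <- IHN. rewrite (out_ext _ (fun x => E x /\ (Bn A N x \/ A N x))). apply meas_add. apply meas_Bn; auto.
    intros x [n [hn h]] h'. apply (D n N ltac:(lia) x); auto.
    intro x; split. intros [h [n [hn h']]]. split; auto. destruct (Nat.eq_dec n N). subst; auto. left; exists n; split; auto; lia.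
    intros [h [[n [hn h']]|h']]; split; auto; [exists n|exists N]; split; auto; lia.
Qed.

Lemma meas_Union_disj (A : nat -> X -> Prop) : (forall n, meas (A n)) -> (forall m n, m <> n -> forall x, A m x -> A n x -> False) ->
  meas (fun x => exists n, A n x).
Proof.
  intros HA D E.
  assert (H : forall N, sumN (fun n => out (fun x => E x /\ A n x)) N <= out E - out (fun x => E x /\ ~ exists n, A n x)).
  { intro N. rewrite <- meas_sum_Bn by auto. assert (h := meas_Bn A N HA E).
    assert (out (fun x => E x /\ ~ (exists n, A n x)) <= out (fun x => E x /\ ~ Bn A N x)).
    { apply out_mono. intros x [h1 h2]. split; auto. intros [n [_ h3]]. apply h2; eauto. } lra. }
  assert (h := out_csub (fun n x => E x /\ A n x) _ H).
  rewrite (out_ext (fun x => E x /\ exists n, A n x) (fun x => exists n, E x /\ A n x)). lra.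
  intro x; split; [intros [h1 [n h2]]; eauto| intros [n [h1 h2]]; eauto].
Qed.

Lemma meas_Union (A : nat -> X -> Prop) : (forall n, meas (A n)) -> meas (fun x => exists n, A n x).
Proof.
  intros HA. set (D := fun n x => A n x /\ ~ Bn A n x).
  assert (HD : forall n, meas (D n)). { intro n. unfold D.
    rewrite (set_ext (fun x => A n x /\ ~ Bn A n x) (fun x => ~ (~ A n x \/ Bn A n x))).
    apply meas_compl, meas_union2. apply meas_compl; auto. apply meas_Bn; auto.
    intro x; split; [tauto|intro h; split; [apply NNPP|]; tauto]. }
  rewrite (set_ext (fun x => exists n, A n x) (fun x => exists n, D n x)).
  - apply meas_Union_disj; auto. intros p q hpq x [h1 h2] [h3 h4].
    destruct (Nat.lt_total p q) as [h|[h|h]]; try lia. apply h4; exists p; auto. apply h2; exists q; auto.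
  - intro x; split; [|intros [n [h _]]; eauto]. intros [n hn]. induction n as [n IH] using lt_wf_ind.
    destruct (classic (Bn A n x)) as [[k [hk h]]|h]. apply (IH k hk h). exists n; split; auto.
Qed.

Lemma meas_borel A : borel d A -> meas A.
Proof.
  intro HA. apply HA.
  - split; [|split]. intro E. rewrite (out_ext (fun x => E x /\ True) E), (out_ext (fun x => E x /\ ~ True) (fun _ => False)), out_empty.
    lra. intro; tauto. intro; tauto. apply meas_compl. apply meas_Union.
  - apply meas_open.
Qed.

Lemma out_True : out (fun _ => True) = 1.
Proof.
  rewrite out_open by apply open_True. apply Rle_antisym; [apply lam_01|].
  destruct (cover1 (fun _ => True) (fun x => x) (fun _ => True)) as [l [h1 h2]]; auto.
  apply (closed_ext d (fun x => ~ False)). tauto. apply closed_compl_open, open_empty. apply cont_id. apply open_True.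
  rewrite <- (m_all l) by auto. apply lam_ub; auto.
Qed.

Lemma out_sigma (A : nat -> X -> Prop) : (forall n, borel d (A n)) -> (forall m n, m <> n -> forall x, A m x -> A n x -> False) ->
  infinite_sum (fun n => out (A n)) (out (fun x => exists n, A n x)).
Proof.
  intros HA D.
  assert (HS : forall N, sumN (fun n => out (A n)) N = out (Bn A N)).
  { intro N. rewrite <- (out_ext (fun x => True /\ Bn A N x)) by tauto.
    rewrite meas_sum_Bn; auto. 2: intro; apply meas_borel; auto. induction N; cbn [sumN]; auto. rewrite IHN. f_equal. apply out_ext; tauto. }
  assert (Hle : forall N, out (Bn A N) <= out (fun x => exists n, A n x)).
  { intro N. apply out_mono. intros x [n [_ h]]; eauto. }
  assert (Hinc : forall M N, (M <= N)%nat -> out (Bn A M) <= out (Bn A N)).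
  { intros M N h. apply out_mono. intros x [n [hn h']]. exists n; split; auto; lia. }
  intros e He. destruct (classic (exists N, out (fun x => exists n, A n x) - e < out (Bn A N))) as [[N HN]|Hn].
  - exists N. intros n hn. unfold Rdist. rewrite sum_f_R0_sumN, HS.
    assert (h1 := Hle (S n)). assert (h2 := Hinc N (S n) ltac:(lia)). apply Rabs_def1; lra.
  - exfalso. assert (out (fun x => exists n, A n x) <= out (fun x => exists n, A n x) - e); [|lra].
    apply out_csub. intro N. rewrite HS. apply Rnot_lt_le. intro h; apply Hn; eauto.
Qed.

Definition KBmeasure : prob_measure d.
Proof.
  refine {| pm := out |}.
  - intros; apply out_01.
  - apply out_True.
  - apply out_sigma.
Defined.

Lemma lam_T G : open_set d G -> lam (fun x => G (T x)) = lam G.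
Proof.
  intro HG. apply Rle_antisym.
  - apply lam_least. intros l' hl'.
    destruct (cover1 (CU l') T G (closed_CU l') HT HG hl') as [l [h1 h2]].
    eapply Rle_trans; [|apply (lam_ub _ l h2)]. apply m_T2. intros x hx. apply h1, U_CU; auto.
  - apply lam_least. intros l hl.
    destruct (cover1 (fun x => CU l (T x)) (fun x => x) (fun x => G (T x))) as [l' [h1 h2]].
    apply closed_preimage; auto. apply closed_CU. apply cont_id. apply open_preimage; auto. intros x hx; apply hl; auto.
    eapply Rle_trans; [|apply (lam_ub _ l' h2)]. apply m_T1. intros x hx. apply h1, U_CU; auto.
Qed.

Lemma out_T_le A : out (fun x => A (T x)) <= out A.
Proof.
  apply out_greatest. intros G HG HA. rewrite <- lam_T by auto. apply out_le_lam. apply open_preimage; auto.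
  intros x hx; apply HA; auto.
Qed.

Lemma out_compl A : borel d A -> out (fun x => ~ A x) = 1 - out A.
Proof.
  intro HA. rewrite <- out_True. rewrite <- (meas_eq A (fun _ => True) (meas_borel A HA)).
  rewrite (out_ext (fun x => True /\ A x) A), (out_ext (fun x => True /\ ~ A x) (fun x => ~ A x)); try (intro; tauto). lra.
Qed.

Lemma KB_invariant : invariant T KBmeasure.
Proof.
  intros A HA. simpl. apply Rle_antisym. apply out_T_le.
  assert (HAT : borel d (fun x => A (T x))) by (apply borel_preimage; auto).
  assert (h1 := out_compl _ HAT). assert (h2 := out_compl _ HA).
  assert (h3 := out_T_le (fun x => ~ A x)). simpl in h3. lra.
Qed.

Context (F : X -> Prop) (c : R) (HF : closed_set d F)
  (Hfreq : forall l, (1 <= l)%nat -> c * INR l <= INR (count_in (fun n => F (iter T n z)) 0 l)).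

Lemma KB_F : c <= KBmeasure F.
Proof.
  simpl. apply out_greatest. intros G HG HFG.
  destruct (cover1 F (fun x => x) G HF (cont_id d) HG HFG) as [l [h1 h2]].
  eapply Rle_trans; [|apply (lam_ub _ l h2)].
  apply (Un_cv_ge_const (Af (U l)) c (mB l)); [|apply m_cv].
  intro k. unfold Af, freq. specialize (Hfreq (S (phi k)) ltac:(lia)).
  assert (h : (count_in (fun n => F (iter T n z)) 0 (S (phi k)) <= visits (U l) (S (phi k)))%nat).
  { apply count_mono. intros j _; apply h1. }
  apply le_INR in h. assert (0 < INR (S (phi k))) by (apply lt_0_INR; lia).
  apply (Rmult_le_reg_r (INR (S (phi k)))); auto. unfold Rdiv. rewrite Rmult_assoc, Rinv_l; lra.
Qed.

End KB1.

Theorem KB_exists {X : Type} (d : X -> X -> R) (Hd : is_metric d) (Hcpt : compact_space d) (T : X -> X)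
  (HT : continuous_map d T) (z : X) (F : X -> Prop) (c : R) : closed_set d F ->
  (forall l, (1 <= l)%nat -> c * INR l <= INR (count_in (fun n => F (iter T n z)) 0 l)) ->
  exists mu : prob_measure d, invariant T mu /\ c <= mu F.
Proof.
  intros HF Hfreq. exists (KBmeasure d Hd Hcpt T z z). split.
  apply (KB_invariant d Hd Hcpt T HT z z). apply (KB_F d Hd Hcpt T z z F c HF Hfreq).
Qed.

Section Dyn.
Context {X : Type} (d : X -> X -> R) (Hd : is_metric d) (Hcpt : compact_space d) (T : X -> X)
  (HT : continuous_map d T).

Lemma iter_S n x : iter T (S n) x = T (iter T n x). Proof. reflexivity. Qed.

Lemma iter_add a n x : iter T (a + n) x = iter T n (iter T a x).
Proof. induction n. rewrite Nat.add_0_r; auto. rewrite Nat.add_succ_r, !iter_S, IHn; auto. Qed.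

Lemma iter_fix p n : T p = p -> iter T n p = p.
Proof. intro H; induction n; auto. rewrite iter_S, IHn; auto. Qed.

Lemma iter_cont n : continuous_map d (iter T n).
Proof.
  induction n. apply cont_id. apply (cont_comp d T (iter T n)); auto.
Qed.

Lemma cont_near u v eps l : exists r, 0 < r /\ forall w1 w2, d w1 u < r -> d w2 v < r ->
  forall n, (n < l)%nat -> d (iter T n u) (iter T n v) < eps -> d (iter T n w1) (iter T n w2) < eps.
Proof.
  induction l.
  - exists 1; split; [lra|]. intros; lia.
  - destruct IHl as [r0 [Hr0 H0]].
    destruct (Rlt_dec (d (iter T l u) (iter T l v)) eps) as [hl|hl].
    + set (s := eps - d (iter T l u) (iter T l v)).
      destruct (iter_cont l u (s/2) ltac:(unfold s; lra)) as [d1 [hd1 H1]].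
      destruct (iter_cont l v (s/2) ltac:(unfold s; lra)) as [d2 [hd2 H2]].
      exists (Rmin r0 (Rmin d1 d2)). split. repeat apply Rmin_pos; auto.
      intros w1 w2 h1 h2 n hn hnear.
      assert (h1' : d w1 u < r0) by (eapply Rlt_le_trans; [apply h1|apply Rmin_l]).
      assert (h2' : d w2 v < r0) by (eapply Rlt_le_trans; [apply h2|apply Rmin_l]).
      destruct (Nat.eq_dec n l) as [->|hne]; [|apply H0; auto; lia].
      assert (e1 : d u w1 < d1). { rewrite (d_sym d Hd). eapply Rlt_le_trans; [apply h1|]. eapply Rle_trans; [apply Rmin_r|apply Rmin_l]. }
      assert (e2 : d v w2 < d2). { rewrite (d_sym d Hd). eapply Rlt_le_trans; [apply h2|]. eapply Rle_trans; [apply Rmin_r|apply Rmin_r]. }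
      specialize (H1 _ e1). specialize (H2 _ e2).
      assert (t1 := d_tri d Hd (iter T l w1) (iter T l u) (iter T l w2)).
      assert (t2 := d_tri d Hd (iter T l u) (iter T l v) (iter T l w2)).
      rewrite (d_sym d Hd (iter T l w1) (iter T l u)) in t1. unfold s in *. lra.
    + exists r0; split; auto. intros w1 w2 h1 h2 n hn hnear.
      destruct (Nat.eq_dec n l) as [->|hne]; [contradiction|apply H0; auto; lia].
Qed.

Lemma proximal_fixed : inhabited X -> proximal d T -> exists p, T p = p.
Proof.
  intros [x] Hp.
  assert (H : forall k, exists n, (k <= n)%nat /\ d (iter T n x) (iter T n (T x)) < / INR (S k)).
  { intro k. apply Hp. apply Rinv_0_lt_compat, lt_0_INR; lia. }
  set (nk := fun k => proj1_sig (constructive_indefinite_description _ (H k))).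
  assert (Hnk : forall k, d (iter T (nk k) x) (T (iter T (nk k) x)) < / INR (S k)).
  { intro k. unfold nk. destruct constructive_indefinite_description as [n [hkn h]]. simpl.
    rewrite <- iter_S. replace (S n) with (1 + n)%nat by lia. rewrite iter_add. auto. }
  destruct (cluster d Hd Hcpt (fun k => iter T (nk k) x)) as [p Hp'].
  exists p. symmetry. apply (d_small_eq d Hd). intros e He.
  destruct (HT p (e/3) ltac:(lra)) as [del [Hdel HTd]].
  destruct (inv_small (e/3) ltac:(lra)) as [J HJ].
  destruct (Hp' (Rmin del (e/3)) ltac:(apply Rmin_pos; lra) J) as [k [hk hd]].
  set (s := iter T (nk k) x) in *.
  assert (h1 : d s p < del) by (eapply Rlt_le_trans; [apply hd|apply Rmin_l]).
  assert (h2 : d s p < e/3) by (eapply Rlt_le_trans; [apply hd|apply Rmin_r]).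
  assert (h3 := HTd s ltac:(rewrite (d_sym d Hd); auto)).
  assert (h4 := Hnk k). fold s in h4. assert (h5 := HJ k hk).
  assert (t1 := d_tri d Hd p s (T p)). assert (t2 := d_tri d Hd s (T s) (T p)).
  rewrite (d_sym d Hd p s) in t1. rewrite (d_sym d Hd (T s) (T p)) in t2. lra.
Qed.

Lemma count_pos_exists (P : nat -> Prop) a L : (0 < count_in P a L)%nat -> exists k, (k < L)%nat /\ P (a + k)%nat.
Proof.
  induction L; simpl; intro h. lia. destruct excluded_middle_informative as [hp|hp].
  exists L; split; auto. destruct (IHL ltac:(lia)) as [k [hk hk']]. exists k; split; auto.
Qed.

Lemma BD_infinite (P : nat -> Prop) : banach_density_one P -> forall N, exists n, (N <= n)%nat /\ P n.
Proof.
  intros H N. destruct (H (1/2) ltac:(lra)) as [N0 [hN0 HN0]].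
  specialize (HN0 N N0 (le_n _)). assert (0 < INR N0) by (apply lt_0_INR; lia).
  assert (h : (0 < count_in P N N0)%nat). { apply INR_lt. simpl. lra. }
  destruct (count_pos_exists P N N0 h) as [k [_ hk]]. exists (N + k)%nat; split; auto; lia.
Qed.

Lemma BD_mono (P Q : nat -> Prop) : (forall n, P n -> Q n) -> banach_density_one P -> banach_density_one Q.
Proof.
  intros H HP lam hlam. destruct (HP lam hlam) as [N [hN HN]]. exists N; split; auto.
  intros a L hL. eapply Rle_trans; [apply HN; auto|]. apply le_INR, count_mono. intros; auto.
Qed.

Lemma count_and (P Q : nat -> Prop) a L : (count_in P a L + count_in Q a L <= count_in (fun n => P n /\ Q n) a L + L)%nat.
Proof.
  assert (h1 := count_compl P a L). assert (h2 := count_compl Q a L). assert (h3 := count_compl (fun n => P n /\ Q n) a L).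
  assert (h4 := count_union (fun n => ~ P n) (fun n => ~ Q n) a L).
  assert (h5 : count_in (fun n => ~ (P n /\ Q n)) a L = count_in (fun n => ~ P n \/ ~ Q n) a L).
  { apply count_ext. intros; tauto. }
  lia.
Qed.

Lemma BD_and (P Q Rr : nat -> Prop) : banach_density_one P -> banach_density_one Q -> (forall n, P n -> Q n -> Rr n) ->
  banach_density_one Rr.
Proof.
  intros HP HQ H lam hlam. destruct (HP ((1 + lam)/2) ltac:(lra)) as [N1 [h1 H1]].
  destruct (HQ ((1 + lam)/2) ltac:(lra)) as [N2 [h2 H2]].
  exists (Nat.max N1 N2). split; [lia|]. intros a L hL.
  specialize (H1 a L ltac:(lia)). specialize (H2 a L ltac:(lia)).
  assert (h := count_and P Q a L). apply le_INR in h. rewrite !plus_INR in h.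
  assert (h' : (count_in (fun n => P n /\ Q n) a L <= count_in Rr a L)%nat) by (apply count_mono; intros k _ [hp hq]; auto).
  apply le_INR in h'. lra.
Qed.

Lemma notBD (P : nat -> Prop) : ~ banach_density_one P -> exists lam, lam < 1 /\ forall N, (1 <= N)%nat ->
  exists a L, (N <= L)%nat /\ INR (count_in P a L) < lam * INR L.
Proof.
  intro H. apply NNPP; intro H'. apply H. intros lam hlam. apply NNPP; intro h1. apply H'. exists lam; split; auto.
  intros N hN. apply NNPP; intro h2. apply h1. exists N; split; auto. intros a L hL. apply Rnot_lt_le. intro h3. apply h2.
  exists a, L; auto.
Qed.

Definition farc u v eps l := count_in (fun n => eps <= d (iter T n u) (iter T n v)) 0 l.

Lemma argmin_nat (f : nat -> R) L : exists j, (j <= L)%nat /\ forall i, (i <= L)%nat -> f j <= f i.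
Proof.
  induction L. exists O; split; auto. intros i hi; replace i with O by lia; lra.
  destruct IHL as [j [hj H]]. destruct (Rle_dec (f j) (f (S L))) as [h|h].
  - exists j; split; auto. intros i hi. destruct (Nat.eq_dec i (S L)). subst; auto. apply H; lia.
  - exists (S L); split; auto. intros i hi. destruct (Nat.eq_dec i (S L)). subst; lra. specialize (H i ltac:(lia)). lra.
Qed.

Lemma notBP_witness x y : ~ banach_proximal d T x y -> exists eps c u v, 0 < eps /\ 0 < c /\
  (forall l, (1 <= l)%nat -> c * INR l <= INR (farc u v eps l)) /\ (forall r, 0 < r -> exists a, d (iter T a y) v < r).
Proof.
  intro H. assert (H1 : exists eps, 0 < eps /\ ~ banach_density_one (fun n => d (iter T n x) (iter T n y) < eps)).
  { apply NNPP; intro h. apply H. intros eps he. apply NNPP; intro h'. apply h; eauto. }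
  destruct H1 as [eps [Heps H1]]. destruct (notBD _ H1) as [lam [hlam H2]].
  set (c := (1 - lam) / 2). assert (Hc : 0 < c) by (unfold c; lra).
  set (Far := fun n => eps <= d (iter T n x) (iter T n y)).
  assert (W : forall k, exists b, forall l, (l <= S k)%nat -> c * INR l <= INR (count_in Far b l)).
  { intro k. destruct (inv_small (c / INR (S (S k)))) as [J HJ].
    { apply Rdiv_lt_0_compat; auto. apply lt_0_INR; lia. }
    destruct (H2 (S J) ltac:(lia)) as [a [L [hL hc]]].
    assert (EF : forall j, count_in Far a j = (j - count_in (fun n => (d (iter T n x) (iter T n y) < eps)%R) a j)%nat).
    { intro j. assert (h := count_compl (fun n => d (iter T n x) (iter T n y) < eps) a j).
      cbv beta in h. rewrite (count_ext (fun n => ~ d (iter T n x) (iter T n y) < eps) Far a j) in h. lia.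
      intros; unfold Far; split; intros; lra. }
    assert (HfarL : (1 - lam) * INR L < INR (count_in Far a L)).
    { rewrite EF. rewrite minus_INR by apply count_le. lra. }
    destruct (argmin_nat (fun j => INR (count_in Far a j) - c * INR j) L) as [j [hj Hj]].
    exists (a + j)%nat. intros l hl.
    destruct (le_lt_dec (j + l) L) as [hjl|hjl].
    - specialize (Hj (j + l)%nat hjl). rewrite count_split, plus_INR, plus_INR in Hj. lra.
    - exfalso.
      assert (hb : (count_in Far (a + j) (L - j) <= L - j)%nat) by apply count_le.
      assert (hs := count_split Far a j (L - j)). replace (j + (L - j))%nat with L in hs by lia.
      assert (Hj0 := Hj O ltac:(lia)). simpl count_in in Hj0. simpl INR in Hj0.
      rewrite hs, plus_INR in HfarL. apply le_INR in hb. rewrite minus_INR in hb by lia.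
      assert (hjL : INR j <= INR L) by (apply le_INR; auto).
      assert (hLj : c * INR L < INR L - INR j).
      { assert (E : 1 - lam = 2 * c) by (unfold c; lra). rewrite E in HfarL. nra. }
      assert (hJ := HJ J (le_n _)).
      assert (hL' : INR (S J) <= INR L) by (apply le_INR; auto).
      assert (hl' : INR L < INR (j + l)) by (apply lt_INR; lia). rewrite plus_INR in hl'.
      assert (hl2 : INR l <= INR (S (S k))) by (apply le_INR; lia).
      assert (hSk : 0 < INR (S (S k))) by (apply lt_0_INR; lia).
      assert (hJ2 : INR (S (S k)) < c * INR (S J)).
      { assert (0 < INR (S J)) by (apply lt_0_INR; lia).
        apply (Rmult_lt_compat_r (INR (S J) * INR (S (S k)))) in hJ; [|apply Rmult_lt_0_compat; auto].
        replace (/ INR (S J) * (INR (S J) * INR (S (S k)))) with (INR (S (S k))) in hJ by (field; lra).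
        replace (c / INR (S (S k)) * (INR (S J) * INR (S (S k)))) with (c * INR (S J)) in hJ by (field; lra). auto. }
      assert (c * INR (S J) <= c * INR L) by (apply Rmult_le_compat_l; lra). lra. }
  set (b := fun k => proj1_sig (constructive_indefinite_description _ (W k))).
  assert (Hb : forall k l, (l <= S k)%nat -> c * INR l <= INR (count_in Far (b k) l)).
  { intro k; unfold b; destruct constructive_indefinite_description; auto. }
  destruct (cluster2 d Hd Hcpt (fun k => iter T (b k) x) (fun k => iter T (b k) y)) as [u [v Huv]].
  exists eps, c, u, v. repeat split; auto.
  - intros l hl. apply Rnot_lt_le; intro hlt.
    destruct (cont_near u v eps l) as [r [hr Hr]].
    destruct (Huv r hr l) as [k [hk [h1 h2]]].
    set (Nr := fun w1 w2 n => (d (iter T n w1) (iter T n w2) < eps)%R).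
    set (x' := iter T (b k) x) in *. set (y' := iter T (b k) y) in *.
    assert (hcm : (count_in (Nr u v) 0 l <= count_in (Nr x' y') 0 l)%nat).
    { apply count_mono. intros n hn hnear. apply Hr; auto. }
    assert (e1 := count_compl (Nr u v) 0 l).
    assert (e2 := count_compl (Nr x' y') 0 l).
    assert (e3 : count_in (fun n => ~ Nr u v n) 0 l = farc u v eps l).
    { apply count_ext. intros; unfold Nr; split; intros; lra. }
    assert (e4 : count_in (fun n => ~ Nr x' y' n) 0 l = count_in Far (b k) l).
    { rewrite (count_shift Far). apply count_ext. intros j _. unfold Far, Nr, x', y'. rewrite !iter_add. split; intros; lra. }
    specialize (Hb k l ltac:(lia)). rewrite <- e4 in Hb.
    assert (h : (count_in (fun n => ~ Nr x' y' n) 0 l <= farc u v eps l)%nat) by lia.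
    apply le_INR in h. lra.
  - intros r hr. destruct (Huv r hr O) as [k [_ [_ h2]]]. exists (b k); auto.
Qed.

End Dyn.

Section Main1.
Context {X : Type} (d : X -> X -> R) (Hd : is_metric d) (Hcpt : compact_space d) (T : X -> X)
  (HT : continuous_map d T) (Hne : inhabited X).

Lemma invariant_iter (mu : prob_measure d) : invariant T mu -> forall n A, borel d A ->
  mu (fun x => A (iter T n x)) = mu A.
Proof.
  intros Hinv n. induction n; intros A HA. reflexivity.
  change (mu (fun x => (fun y => A (T y)) (iter T n x)) = mu A). rewrite IHn. apply Hinv; auto.
  apply borel_preimage; auto.
Qed.

Lemma dirac_inv p : T p = p -> invariant T (dirac d p).
Proof. intros Hp A HA. simpl. unfold dirac_f. rewrite Hp. reflexivity. Qed.

Lemma point_mass (mu : prob_measure d) p : mu (fun w => w = p) = 1 -> forall A, borel d A -> mu A = dirac_f p A.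
Proof.
  intros H1 A HA. assert (Hp : borel d (fun w => w = p)) by (apply borel_closed, closed_point; auto).
  unfold dirac_f. destruct excluded_middle_informative as [h|h].
  - apply Rle_antisym. apply pm_le1; auto. rewrite <- H1. apply pm_mono; auto. intros x ->; auto.
  - apply Rle_antisym; [|apply pm_nonneg; auto]. rewrite <- (Rminus_diag 1). rewrite <- H1 at 2.
    rewrite <- pm_compl by auto. apply pm_mono; auto. apply borel_compl; auto. intros x hx ->; auto.
Qed.

Lemma far_zero_point (mu : prob_measure d) p : (forall r, 0 < r -> mu (fun w => r <= d w p) <= 0) -> mu (fun w => w = p) = 1.
Proof.
  intro H. assert (Hp : borel d (fun w => w = p)) by (apply borel_closed, closed_point; auto).
  set (A := fun n w => / INR (S n) <= d w p).
  assert (HA : forall n, borel d (A n)) by (intro n; apply borel_closed, closed_ge; auto).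
  assert (Hinc : forall n x, A n x -> A (S n) x).
  { intros n x h. unfold A in *. eapply Rle_trans; [|apply h]. apply Rinv_le_contravar. apply lt_0_INR; lia. apply le_INR; lia. }
  assert (E : mu (fun x => exists n, A n x) = 1 - mu (fun w => w = p)).
  { rewrite <- pm_compl by auto. apply pm_ext. intro x; split.
    - intros [n h] ->. unfold A in h. rewrite d_xx in h; auto. assert (0 < / INR (S n)) by apply inv_S_pos. lra.
    - intro h. assert (hd := d_pos d Hd x p h). destruct (inv_small _ hd) as [J HJ]. exists J. left; apply HJ; lia. }
  assert (Hle : mu (fun x => exists n, A n x) <= 0).
  { apply Rnot_lt_le; intro hlt. destruct (pm_incr d mu A HA Hinc _ hlt) as [N HN].
    specialize (H _ (inv_S_pos N)). fold (A N) in H. lra. }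
  assert (h1 := pm_le1 d mu _ Hp). lra.
Qed.

Lemma C1_proximal : strongly_proximal d T -> proximal d T.
Proof.
  intros HSP x y eps Heps N.
  destruct (HSP (dirac d x) (dirac d y) (Rmin eps 1) ltac:(apply Rmin_pos; lra) N) as [n [hn [e' [he' [he'e Hpl]]]]].
  exists n; split; auto.
  destruct (Hpl (fun w => w = iter T n x) ltac:(apply borel_closed, closed_point; auto)) as [h _].
  unfold pushn in h. simpl in h. unfold dirac_f in h.
  destruct excluded_middle_informative as [_|hn']; [|exfalso; auto].
  destruct excluded_middle_informative as [[a [-> ha]]|hn'].
  - rewrite (d_sym d Hd). eapply Rlt_le_trans; [apply ha|]. eapply Rle_trans; [left; apply he'e|apply Rmin_l].
  - exfalso. assert (Rmin eps 1 <= 1) by apply Rmin_r. lra.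
Qed.

Lemma SP_dirac p : strongly_proximal d T -> T p = p -> forall mu : prob_measure d, invariant T mu ->
  forall A, borel d A -> mu A = dirac_f p A.
Proof.
  intros HSP Hp mu Hmu. apply point_mass. apply far_zero_point. intros r hr.
  apply Rnot_lt_le; intro hlt.
  set (e := Rmin (mu (fun w => r <= d w p)) r).
  assert (he : 0 < e) by (apply Rmin_pos; auto).
  destruct (HSP mu (dirac d p) e he O) as [n [_ [e' [he' [he'e Hpl]]]]].
  destruct (Hpl (fun w => r <= d w p) ltac:(apply borel_closed, closed_ge; auto)) as [h _].
  assert (E1 : pushn T n mu (fun w => r <= d w p) = mu (fun w => r <= d w p)).
  { apply (invariant_iter mu Hmu n (fun w => r <= d w p)). apply borel_closed, closed_ge; auto. }
  assert (E2 : forall B, pushn T n (dirac d p) B = dirac_f p B).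
  { intro B. unfold pushn. simpl. unfold dirac_f. rewrite iter_fix; auto. }
  rewrite E1, E2 in h. unfold dirac_f in h.
  destruct excluded_middle_informative as [[a [ha1 ha2]]|hn'].
  - assert (e <= r) by apply Rmin_r. rewrite (d_sym d Hd) in ha2. lra.
  - assert (e <= mu (fun w => r <= d w p)) by apply Rmin_l. lra.
Qed.

Lemma C1_C2 : strongly_proximal d T -> proximal d T /\ uniquely_ergodic d T.
Proof.
  intro HSP. assert (Hprox := C1_proximal HSP). split; auto.
  destruct (proximal_fixed d Hd Hcpt T HT Hne Hprox) as [p Hp].
  split. exists (dirac d p); apply dirac_inv; auto.
  intros mu nu Hmu Hnu A HA. rewrite (SP_dirac p HSP Hp mu Hmu A HA), (SP_dirac p HSP Hp nu Hnu A HA). auto.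
Qed.

Lemma C2_C3 : proximal d T /\ uniquely_ergodic d T -> exists x0, is_system_support d T (fun x => x = x0).
Proof.
  intros [Hprox [_ HUE]]. destruct (proximal_fixed d Hd Hcpt T HT Hne Hprox) as [p Hp].
  assert (Hall : forall mu : prob_measure d, invariant T mu -> forall A, borel d A -> mu A = dirac_f p A).
  { intros mu Hmu A HA. apply (HUE mu (dirac d p) Hmu (dirac_inv p Hp) A HA). }
  exists p. split; [apply closed_point; auto|split].
  - intros mu Hmu. rewrite Hall; auto. unfold dirac_f; destruct excluded_middle_informative; tauto.
    apply borel_closed, closed_point; auto.
  - intros C' HC' H x ->. specialize (H (dirac d p) (dirac_inv p Hp)). simpl in H. unfold dirac_f in H.
    destruct excluded_middle_informative; auto. lra.
Qed.

Lemma C3_fixed x0 : is_system_support d T (fun x => x = x0) ->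
  T x0 = x0 /\ forall mu : prob_measure d, invariant T mu -> mu (fun x => x = x0) = 1.
Proof.
  intros [_ [H1 H2]]. split; auto.
  assert (Hex : exists mu : prob_measure d, invariant T mu).
  { apply NNPP; intro h. apply (H2 (fun _ => False) (closed_empty d)) with x0; auto. intros mu hmu. exfalso; eauto. }
  destruct Hex as [mu Hmu].
  apply NNPP; intro hne.
  assert (Hp : borel d (fun w => w = x0)) by (apply borel_closed, closed_point; auto).
  assert (E : mu (fun w => T w = x0) = 1).
  { rewrite <- (H1 mu Hmu). apply (Hmu (fun w => w = x0) Hp). }
  assert (Hs := pm_add2 d mu (fun w => w = x0) (fun w => T w = x0) Hp
     ltac:(apply (borel_preimage d T (fun w => w = x0)); auto) ltac:(intros x -> h; auto)).
  rewrite E, (H1 mu Hmu) in Hs.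
  assert (h := pm_le1 d mu (fun x => x = x0 \/ T x = x0) ltac:(apply borel_union2; auto; apply (borel_preimage d T (fun w => w = x0)); auto)).
  lra.
Qed.

Lemma C3_C4 : (exists x0, is_system_support d T (fun x => x = x0)) -> forall x y, banach_proximal d T x y.
Proof.
  intros [x0 Hsup]. destruct (C3_fixed x0 Hsup) as [Hfix Hmass].
  assert (Hatt : forall x, banach_proximal d T x x0).
  { intro x. apply NNPP; intro hn. destruct (notBP_witness d Hd Hcpt T HT x x0 hn) as [eps [c [u [v [he [hc [Hf Hv]]]]]]].
    assert (Hv0 : v = x0).
    { symmetry. apply (d_small_eq d Hd). intros r hr. destruct (Hv r hr) as [a ha]. rewrite iter_fix in ha; auto. }
    subst v.
    destruct (KB_exists d Hd Hcpt T HT u (fun w => eps <= d w x0) c ltac:(apply closed_ge; auto)) as [mu [Hmu Hc]].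
    { intros l hl. unfold farc in Hf. specialize (Hf l hl).
      rewrite (count_ext (fun n => eps <= d (iter T n u) x0) (fun n => eps <= d (iter T n u) (iter T n x0))); [apply Hf|].
      intros k _. rewrite (iter_fix T x0); auto. tauto. }
    assert (Hm := Hmass mu Hmu).
    rewrite (point_mass mu x0 Hm) in Hc by (apply borel_closed, closed_ge; auto).
    unfold dirac_f in Hc. destruct excluded_middle_informative as [h|h]. rewrite d_xx in h; auto; lra. lra. }
  intros x y eps heps.
  apply (BD_and _ _ _ (Hatt x (eps/2) ltac:(lra)) (Hatt y (eps/2) ltac:(lra))).
  intros n h1 h2. rewrite (iter_fix T x0 n Hfix) in h1, h2.
  assert (t := d_tri d Hd (iter T n x) x0 (iter T n y)). rewrite (d_sym d Hd x0) in t. lra.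
Qed.

End Main1.

Lemma sumN_nonneg f m : (forall n, 0 <= f n) -> 0 <= sumN f m.
Proof. intro H; induction m; simpl; [lra|]. specialize (H m); lra. Qed.

Lemma sumN_ext f g m : (forall n, f n = g n) -> sumN f m = sumN g m.
Proof. intro H; induction m; simpl; auto. rewrite IHm, H; auto. Qed.

Lemma sumN_const c m : sumN (fun _ => c) m = INR m * c.
Proof. induction m; cbn [sumN]. simpl; lra. rewrite IHm, S_INR; lra. Qed.

Lemma sumN_term f m n : (forall k, 0 <= f k) -> (n < m)%nat -> f n <= sumN f m.
Proof.
  intros H hn. induction m; [lia|]. cbn [sumN]. destruct (Nat.eq_dec n m) as [->|hne].
  assert (h := sumN_nonneg f m H); lra. assert (h := IHm ltac:(lia)). specialize (H m); lra.
Qed.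

Lemma sumN_tail f N m e : (forall k, 0 <= f k) -> (N <= m)%nat -> (forall n, (N <= n)%nat -> (n < m)%nat -> e <= f n) ->
  e * (INR m - INR N) <= sumN f m.
Proof.
  intros H hNm Hf. induction m.
  - replace N with O by lia. simpl; lra.
  - destruct (Nat.eq_dec N (S m)) as [->|hne]. rewrite Rminus_diag, Rmult_0_r. apply sumN_nonneg; auto.
    cbn [sumN]. assert (h := IHm ltac:(lia) ltac:(intros; apply Hf; lia)). assert (h2 := Hf m ltac:(lia) ltac:(lia)).
    rewrite S_INR. lra.
Qed.

Section Main2.
Context {X : Type} (d : X -> X -> R) (Hd : is_metric d) (Hcpt : compact_space d) (T : X -> X)
  (HT : continuous_map d T) (Hne : inhabited X).

Lemma borel_const (P : Prop) : borel d (fun _ : X => P).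
Proof.
  destruct (classic P) as [h|h]. apply (borel_ext d (fun _ => True)); [tauto|apply borel_True].
  apply (borel_ext d (fun _ => False)); [tauto|apply borel_empty].
Qed.

Lemma borel_count (B : nat -> X -> Prop) : (forall n, borel d (B n)) -> forall m (P : nat -> Prop),
  borel d (fun x => P (count_in (fun n => B n x) 0 m)).
Proof.
  intros HB m. induction m; intro P. cbn [count_in]. apply borel_const.
  apply (borel_ext d (fun x => (B m x /\ P (count_in (fun n => B n x) 0 m + 1)%nat) \/
                              (~ B m x /\ P (count_in (fun n => B n x) 0 m)))).
  - intro x. simpl. destruct excluded_middle_informative as [h|h]. tauto. rewrite Nat.add_0_r. tauto.
  - apply borel_union2; apply borel_inter2; auto. apply (IHm (fun k => P (k + 1)%nat)). apply borel_compl; auto.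
Qed.

Lemma GL (mu : prob_measure d) (B : nat -> X -> Prop) : (forall n, borel d (B n)) -> forall m b W, borel d W ->
  (forall x, W x -> INR (count_in (fun n => B n x) 0 m) <= b) ->
  sumN (fun n => mu (fun x => B n x /\ W x)) m <= b * mu W.
Proof.
  intros HB m. induction m; intros b W HW Hc.
  - simpl. destruct (classic (exists x, W x)) as [[x hx]|hn].
    + specialize (Hc x hx). simpl in Hc. assert (0 <= mu W) by (apply pm_nonneg; auto). nra.
    + rewrite (pm_zero' d mu W) by (intros x hx; eauto). lra.
  - set (W1 := fun x => W x /\ B m x). set (W2 := fun x => W x /\ ~ B m x).
    assert (HW1 : borel d W1) by (apply borel_inter2; auto).
    assert (HW2 : borel d W2) by (apply borel_inter2; auto; apply borel_compl; auto).
    assert (Hsplit : forall n, mu (fun x => B n x /\ W x) = mu (fun x => B n x /\ W1 x) + mu (fun x => B n x /\ W2 x)).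
    { intro n. rewrite <- pm_add2; auto. apply pm_ext. intro x; unfold W1, W2; split; [|tauto].
      intros [h1 h2]. destruct (classic (B m x)); tauto. apply borel_inter2; auto. apply borel_inter2; auto.
      intros x [_ [_ h]] [_ [_ h']]; auto. }
    assert (HWs : mu W = mu W1 + mu W2).
    { rewrite <- pm_add2; auto. apply pm_ext. intro x; unfold W1, W2; split; [|tauto]. intro h. destruct (classic (B m x)); tauto.
      intros x [_ h] [_ h']; auto. }
    assert (IH1 := IHm (b - 1) W1 HW1 ltac:(intros x [hx hb]; specialize (Hc x hx); simpl in Hc;
       destruct excluded_middle_informative; [|contradiction]; rewrite plus_INR in Hc; simpl in Hc; lra)).
    assert (IH2 := IHm b W2 HW2 ltac:(intros x [hx hb]; specialize (Hc x hx); simpl in Hc;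
       destruct excluded_middle_informative; [contradiction|]; rewrite Nat.add_0_r in Hc; auto)).
    cbn [sumN]. rewrite (sumN_ext _ _ m Hsplit), sumN_plus.
    rewrite (pm_ext d mu (fun x => B m x /\ W x) W1) by (intro x; unfold W1; tauto).
    rewrite HWs. nra.
Qed.


Lemma AVG (mu : prob_measure d) (F : X -> Prop) : borel d F ->
  (forall x dl, 0 < dl -> exists M, forall m, (M <= m)%nat -> INR (count_in (fun n => F (iter T n x)) 0 m) <= dl * INR m) ->
  forall dl, 0 < dl -> exists M, forall m, (M <= m)%nat -> sumN (fun n => mu (fun x => F (iter T n x))) m <= 2 * dl * INR m.
Proof.
  intros HF Hx dl hdl.
  assert (HB : forall n, borel d (fun x => F (iter T n x))) by (intro n; apply borel_preimage; auto; apply iter_cont; auto).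
  set (E := fun m x => INR (count_in (fun n => F (iter T n x)) 0 m) <= dl * INR m).
  assert (HE : forall m, borel d (E m)) by (intro m; apply (borel_count (fun n x => F (iter T n x)) HB m (fun k => INR k <= dl * INR m))).
  set (G := fun M x => exists m, (M <= m)%nat /\ ~ E m x).
  assert (HG : forall M, borel d (G M)).
  { intro M. apply borel_Union. intro m. apply borel_inter2. apply borel_const. apply borel_compl; auto. }
  destruct (pm_decr d mu G HG) with (e := dl) as [M HM]; auto.
  { intros n x [m [hm h]]. exists m; split; auto; lia. }
  { intro x. destruct (Hx x dl hdl) as [M HM]. exists M. intros [m [hm h]]. apply h, HM; auto. }
  exists M. intros m hm.
  assert (H1 : forall n, mu (fun x => F (iter T n x)) <= mu (fun x => F (iter T n x) /\ E m x) + mu (G M)).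
  { intro n. rewrite (pm_ext d mu (fun x => F (iter T n x)) (fun x => (F (iter T n x) /\ E m x) \/ (F (iter T n x) /\ ~ E m x))).
    rewrite pm_add2; auto. apply Rplus_le_compat_l. apply pm_mono; auto. apply borel_inter2; auto. apply borel_compl; auto.
    intros x [_ h]. exists m; split; auto. apply borel_inter2; auto. apply borel_inter2; auto. apply borel_compl; auto.
    intros x [_ h] [_ h']; auto. intro x; split; [intro h; destruct (classic (E m x)); auto|tauto]. }
  eapply Rle_trans; [apply (sumN_le _ _ m H1)|]. rewrite sumN_plus, sumN_const.
  assert (H2 := GL mu (fun n x => F (iter T n x)) HB m (dl * INR m) (E m) (HE m) ltac:(intros x hx; apply hx)).
  assert (h1 := pm_le1 d mu (E m) (HE m)). assert (h2 := pm_nonneg mu (HE m)). assert (0 <= INR m) by apply pos_INR.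
  assert (dl * INR m * mu (E m) <= dl * INR m). { assert (0 <= dl * INR m) by nra. nra. }
  assert (INR m * mu (G M) <= INR m * dl) by nra. lra.
Qed.

Lemma open_nbhd A e : open_set d (eps_nbhd d A e).
Proof.
  apply (open_ext d (fun x => exists a : X, A a /\ d x a < e)). intro; unfold eps_nbhd; tauto.
  apply open_union. intro a. destruct (classic (A a)) as [h|h].
  apply (open_ext d (fun x => d x a < e)). intro; tauto. apply open_ball'; auto.
  apply (open_ext d (fun _ => False)). intro; tauto. apply open_empty.
Qed.

Lemma prok_step (al be : prob_measure d) n e p :
  al (fun x => e / 2 <= d (iter T n x) p) <= e -> be (fun x => e / 2 <= d (iter T n x) p) <= e ->
  forall A, borel d A -> pushn T n al A <= pushn T n be (eps_nbhd d A e) + e.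
Proof.
  intros Ha Hb A HA. unfold pushn.
  assert (HAn : borel d (fun x => A (iter T n x))) by (apply borel_preimage; auto; apply iter_cont; auto).
  assert (HFn : borel d (fun x => e / 2 <= d (iter T n x) p)).
  { apply (borel_preimage d (iter T n) (fun w => e/2 <= d w p)). apply iter_cont; auto. apply borel_closed, closed_ge; auto. }
  assert (HNn : borel d (fun x => eps_nbhd d A e (iter T n x))).
  { apply borel_preimage. apply iter_cont; auto. apply borel_open, open_nbhd. }
  destruct (classic (exists a, A a /\ d a p < e / 2)) as [[a [ha hap]]|hn].
  - assert (h1 : be (fun x => ~ e / 2 <= d (iter T n x) p) <= be (fun x => eps_nbhd d A e (iter T n x))).
    { apply pm_mono; auto. apply borel_compl; auto. intros x hx. exists a; split; auto.
      assert (t := d_tri d Hd (iter T n x) p a). rewrite (d_sym d Hd p a) in t. lra. }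
    rewrite pm_compl in h1 by auto. assert (h2 := pm_le1 d al _ HAn). assert (h3 := pm_nonneg al HAn). lra.
  - assert (h1 : al (fun x => A (iter T n x)) <= al (fun x => e / 2 <= d (iter T n x) p)).
    { apply pm_mono; auto. intros x hx. apply Rnot_lt_le; intro h. apply hn; eauto. }
    assert (h2 := pm_nonneg be HNn). lra.
Qed.

Lemma BP_proximal : (forall x y, banach_proximal d T x y) -> proximal d T.
Proof. intros H x y eps he N. apply (BD_infinite _ (H x y eps he) N). Qed.

Lemma C4_C1 : (forall x y, banach_proximal d T x y) -> strongly_proximal d T.
Proof.
  intros HBP mu nu eps heps N.
  destruct (proximal_fixed d Hd Hcpt T HT Hne (BP_proximal HBP)) as [p Hp].
  set (e := Rmin eps 1 / 2).
  assert (he : 0 < e) by (unfold e; assert (0 < Rmin eps 1) by (apply Rmin_pos; lra); lra).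
  assert (hee : e < eps) by (unfold e; assert (0 < Rmin eps 1) by (apply Rmin_pos; lra); assert (Rmin eps 1 <= eps) by apply Rmin_l; lra).
  set (F := fun w => e / 2 <= d w p).
  assert (HF : borel d F) by (apply borel_closed, closed_ge; auto).
  assert (Hx : forall x dl, 0 < dl -> exists M, forall m, (M <= m)%nat -> INR (count_in (fun n => F (iter T n x)) 0 m) <= dl * INR m).
  { intros x dl hdl. destruct (HBP x p (e/2) ltac:(lra) (1 - dl) ltac:(lra)) as [M [hM HM]].
    exists M. intros m hm. specialize (HM 0%nat m hm).
    assert (hc := count_compl (fun n => d (iter T n x) (iter T n p) < e / 2) 0 m).
    assert (E : count_in (fun n => ~ d (iter T n x) (iter T n p) < e / 2) 0 m = count_in (fun n => F (iter T n x)) 0 m).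
    { apply count_ext. intros k _. unfold F. rewrite (iter_fix T p); auto. split; intros; lra. }
    cbv beta in hc. rewrite E in hc. apply (f_equal INR) in hc. rewrite plus_INR in hc. lra. }
  destruct (AVG mu F HF Hx (e/8) ltac:(lra)) as [M1 HM1].
  destruct (AVG nu F HF Hx (e/8) ltac:(lra)) as [M2 HM2].
  set (m := (M1 + M2 + 2 * N + 2)%nat).
  specialize (HM1 m ltac:(unfold m; lia)). specialize (HM2 m ltac:(unfold m; lia)).
  set (f := fun n => mu (fun x => F (iter T n x)) + nu (fun x => F (iter T n x))).
  assert (Hf0 : forall n, 0 <= f n).
  { intro n. unfold f. assert (B : borel d (fun x => F (iter T n x))) by (apply borel_preimage; auto; apply iter_cont; auto).
    assert (h1 := pm_nonneg mu B). assert (h2 := pm_nonneg nu B). lra. }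
  assert (Hex : exists n, (N <= n)%nat /\ (n < m)%nat /\ f n <= e).
  { apply NNPP; intro hn.
    assert (h := sumN_tail f N m e Hf0 ltac:(unfold m; lia) ltac:(intros n h1 h2; apply Rnot_lt_le; intro h3; apply hn; exists n; repeat split; auto; lra)).
    unfold f in h. rewrite sumN_plus in h.
    assert (hm : INR m = INR (M1 + M2) + 2 * INR N + 2) by (unfold m; rewrite !plus_INR, mult_INR; simpl; lra).
    assert (0 <= INR (M1 + M2)) by apply pos_INR. assert (0 <= INR N) by apply pos_INR.
    assert (e * (INR m - INR N) > 2 * (e / 8) * INR m + 2 * (e / 8) * INR m). { rewrite hm. nra. }
    lra. }
  destruct Hex as [n [hn1 [hn2 hn3]]].
  assert (B : borel d (fun x => F (iter T n x))) by (apply borel_preimage; auto; apply iter_cont; auto).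
  assert (h1 := pm_nonneg mu B). assert (h2 := pm_nonneg nu B). unfold f in hn3.
  exists n; split; auto. exists e; split; auto; split; auto.
  intros A HA. split; apply (prok_step _ _ n e p); auto; unfold F in *; lra.
Qed.

Lemma C4_C5 : (forall x y, banach_proximal d T x y) ->
  forall x y eps, 0 < eps -> upper_density_is (fun n => d (iter T n x) (iter T n y) < eps) 1.
Proof.
  intros H x y eps he dl hdl. split.
  - exists O. intros n _ hn. assert (h := count_le (fun n => d (iter T n x) (iter T n y) < eps) 0 n).
    apply le_INR in h. assert (0 < INR n) by (apply lt_0_INR; lia).
    assert (INR (count_in (fun n => d (iter T n x) (iter T n y) < eps) 0 n) / INR n <= 1).
    { apply (Rmult_le_reg_r (INR n)); auto. unfold Rdiv. rewrite Rmult_assoc, Rinv_l; lra. } lra.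
  - intro N. destruct (H x y eps he (1 - dl / 2) ltac:(lra)) as [N0 [hN0 HN0]].
    exists (N + N0)%nat. split; [lia|split; [lia|]]. specialize (HN0 0%nat (N + N0)%nat ltac:(lia)).
    assert (0 < INR (N + N0)) by (apply lt_0_INR; lia).
    apply (Rmult_lt_reg_r (INR (N + N0))); auto. unfold Rdiv. rewrite Rmult_assoc, Rinv_l by lra.
    assert (0 < dl * INR (N + N0)) by nra. nra.
Qed.

Lemma C5_C4 : (forall x y eps, 0 < eps -> upper_density_is (fun n => d (iter T n x) (iter T n y) < eps) 1) ->
  forall x y, banach_proximal d T x y.
Proof.
  intros H x y. apply NNPP; intro hn.
  destruct (notBP_witness d Hd Hcpt T HT x y hn) as [eps [c [u [v [he [hc [Hf _]]]]]]].
  destruct (H u v eps he (c/2) ltac:(lra)) as [_ H2]. destruct (H2 1%nat) as [n [_ [hn1 hn2]]].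
  specialize (Hf n hn1). unfold farc in Hf.
  assert (hc2 := count_compl (fun k => d (iter T k u) (iter T k v) < eps) 0 n).
  assert (E : count_in (fun k => ~ d (iter T k u) (iter T k v) < eps) 0 n = count_in (fun k => eps <= d (iter T k u) (iter T k v)) 0 n).
  { apply count_ext. intros; split; intros; lra. }
  cbv beta in hc2. rewrite E in hc2. apply (f_equal INR) in hc2. rewrite plus_INR in hc2.
  assert (0 < INR n) by (apply lt_0_INR; lia).
  apply (Rmult_lt_compat_r (INR n)) in hn2; auto. unfold Rdiv in hn2. rewrite Rmult_assoc, Rinv_l in hn2 by lra.
  assert (0 < c * INR n) by nra. nra.
Qed.

End Main2.

Theorem mainTheorem1 (X : Type) (d : X -> X -> R) (T : X -> X)
  (Hd : is_metric d) (Hcpt : compact_space d) (Hne : inhabited X)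
  (HT : continuous_map d T) :
  (strongly_proximal d T <-> (proximal d T /\ uniquely_ergodic d T)) /\
  ((proximal d T /\ uniquely_ergodic d T) <->
     (exists x0 : X, is_system_support d T (fun x => x = x0))) /\
  ((exists x0 : X, is_system_support d T (fun x => x = x0)) <->
     (forall x y : X, banach_proximal d T x y)) /\
  ((forall x y : X, banach_proximal d T x y) <->
     (forall x y : X, forall eps, 0 < eps ->
        upper_density_is (fun n => d (iter T n x) (iter T n y) < eps) 1)).
Proof.
  assert (c12 := C1_C2 d Hd Hcpt T HT Hne).
  assert (c23 := C2_C3 d Hd Hcpt T HT Hne).
  assert (c34 := C3_C4 d Hd Hcpt T HT).
  assert (c41 := C4_C1 d Hd Hcpt T HT Hne).
  assert (c45 := C4_C5 d T).
  assert (c54 := C5_C4 d Hd Hcpt T HT).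
  split; [split; [auto|intro h; apply c41, c34, c23; auto]|].
  split; [split; [auto|intro h; apply c12, c41, c34; auto]|].
  split; [split; [auto|intro h; apply c23, c12, c41; auto]|].
  split; auto.
Qed.
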